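(* Suppose the SV parameters ensure spectral decay with some exponent $\nu\in[0,2]$, with times $t_N^*$. Then there exist constants $C,C'>0$, depending on $u_0$ but not on $N$ or $t$, such that for all $t\ge t_N^*$ and all $1\le p<\infty$: \[ \|(I-P_N)(u_N(t)\cdot\nabla\omega_N(t))\|_{L^p}\le CN^{-1}\|\omega_N(t)\|_{L^p} \quad\text{and}\quad \|(I-P_N)(u_N(t)\cdot\nabla\omega_N(t))\|_{L^p}\le C'N^{-1}. \]
   Context: Let $\mathbb{T}^2=\mathbb{R}^2/(2\pi\mathbb{Z})^2$. For $k=(k_1,k_2)\in\mathbb{Z}^2$ let $|k|$ denote the Euclidean norm and $|k|_\infty=\max(|k_1|,|k_2|)$. Fourier coefficients are $\hat f_k=(2\pi)^{-2}\int_{\mathbb{T}^2}f(x)e^{-ik\cdot x}\,dx$. $P_Nf:=\sum_{|k|_\infty\le N}\hat f_k e^{ik\cdot x}$. Convolution is $(K*f)(x)=\int_{\mathbb{T}^2}K(x-y)f(y)\,dy$, so $\widehat{(K*f)}_k=\widetilde K_k\hat f_k$ with $\widetilde K_k:=\int_{\mathbb{T}^2}K(x)e^{-ik\cdot x}dx$. For $v=(v^1,v^2)$, $\mathrm{curl}\,v=\partial_1v^2-\partial_2v^1$. Initial data: $u_0\in L^2(\mathbb{T}^2;\mathbb{R}^2)$ with $\operatorname{div}u_0=0$ in distributions and $\int u_0\,dx=0$; $\omega_0:=\mathrm{curl}\,u_0\in H^{-1}(\mathbb{T}^2)$. SV scheme: for integers $N\ge2$ fix parameters $\epsilon_N>0$,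 $m_N\ge0$, $1\le a_N\le N$, and: numbers $\hat R_k\in[0,1]$ with $\hat R_k=1$ for $|k|\le m_N$, $\hat R_k=0$ for $|k|>2m_N$; $R_{m_N}$ is the trigonometric polynomial with $\widetilde{(R_{m_N})}_k=\hat R_k$, and $Q_N$ is the Fourier multiplier with symbol $\hat Q_k:=1-\hat R_k$; it is assumed $\|R_{m_N}\|_{L^1}\le C\log(N)^2$ with $C$ independent of $N$; $K_{a_N}$ is a trigonometric polynomial with $\widetilde{(K_{a_N})}_k=0$ unless $|k|_\infty\le a_N$, $|\widetilde{(K_{a_N})}_k|\le1$, and $\|K_{a_N}\|_{L^1}\le C\log(N)^2$. The SV approximation is the trigonometric polynomial field $u_N(x,t)=\sum_{0<|k|_\infty\le N}\hat u_k(t)e^{ik\cdot x}$, $k\cdot\hat u_k=0$, solving $\partial_tu_N+P_N(u_N\cdot\nabla u_N)+\nabla p_N=\epsilon_N\Delta(Q_Nu_N)$, $\operatorname{div}u_N=0$, $u_N(\cdot,0)=K_{a_N}*u_0$. Its vorticity $\omega_N:=\mathrm{curl}\,u_N$ solves $\partial_t\omega_N+P_N(u_N\cdot\nabla\omega_N)=\epsilon_N\Delta(Q_N\omega_N)$, $\omega_N(\cdot,0)=K_{a_N}*\omega_0$; $\hat\omega_k(t)$ denotes its Fourier coefficients. Spectral decay: for $\nu\in[0,2]$, the parameter choice ensures spectral decay with exponent $\nu$ if $\epsilon_N\to0$, $\epsilon_Nm_N^2\log(N)^2\to0$, and there are times $t_N^*>0$ with $t_N^*\,a_N^{\nu/2}N\log(N)^2\to0$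 as $N\to\infty$ such that for every $\sigma>0$ there is $C_\sigma$ (independent of $N$ and $t$) with $|\hat\omega_k(t)|\le C_\sigma N^{-\sigma}$ for all $N$, all $t\ge t_N^*$ and all $k$ with $|k|\ge N/2$. *)

(* Defs.v *)
From Stdlib Require Import Reals Lra ZArith List ClassicalEpsilon.
Open Scope R_scope.

Definition Cx : Type := (R * R)%type.
Definition C0 : Cx := (0, 0).
Definition Ci : Cx := (0, 1).
Definition Cadd (z w : Cx) : Cx := (fst z + fst w, snd z + snd w).
Definition Copp (z : Cx) : Cx := (- fst z, - snd z).
Definition Csub (z w : Cx) : Cx := Cadd z (Copp w).
Definition Cmul (z w : Cx) : Cx :=
  (fst z * fst w - snd z * snd w, fst z * snd w + snd z * fst w).
Definition Cscale (r : R) (z : Cx) : Cx := (r * fst z, r * snd z).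
Definition Cconj (z : Cx) : Cx := (fst z, - snd z).
Definition Cmod (z : Cx) : R := sqrt (fst z ^ 2 + snd z ^ 2).
Definition Cexpi (th : R) : Cx := (cos th, sin th).

Definition Z2 : Type := (Z * Z)%type.
Definition kinf (k : Z2) : Z := Z.max (Z.abs (fst k)) (Z.abs (snd k)).
Definition knorm2 (k : Z2) : R := IZR (fst k * fst k + snd k * snd k)%Z.
Definition knorm (k : Z2) : R := sqrt (knorm2 k).
Definition kneg (k : Z2) : Z2 := (- fst k, - snd k)%Z.
Definition ksub (k j : Z2) : Z2 := (fst k - fst j, snd k - snd j)%Z.
Definition k0 : Z2 := (0, 0)%Z.

Definition zrange (M : nat) : list Z :=
  map (fun i => (Z.of_nat i - Z.of_nat M)%Z) (seq 0 (2 * M + 1)).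
Definition box (M : nat) : list Z2 := list_prod (zrange M) (zrange M).

Definition Csum {A : Type} (l : list A) (f : A -> Cx) : Cx :=
  fold_right (fun a acc => Cadd (f a) acc) C0 l.
Definition Rsum {A : Type} (l : list A) (f : A -> R) : R :=
  fold_right (fun a acc => f a + acc) 0 l.

Definition trig_eval (M : nat) (c : Z2 -> Cx) (x1 x2 : R) : Cx :=
  Csum (box M) (fun k => Cmul (c k) (Cexpi (IZR (fst k) * x1 + IZR (snd k) * x2))).

(* ---------- integration over T^2 = [0,2pi)^2 (Lebesgue measure dx) ----------
   For continuous g (all integrands below are continuous), the integral is the
   limit of the uniform-grid Riemann sums; we define it as that limit. *)
Definition riemann_T2 (g : R -> R -> R) (n : nat) : R :=
  (2 * PI / INR (S n)) ^ 2 *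
  sum_f_R0 (fun a => sum_f_R0 (fun b =>
     g (2 * PI * INR a / INR (S n)) (2 * PI * INR b / INR (S n))) n) n.
Definition int_T2 (g : R -> R -> R) : R :=
  epsilon (inhabits 0) (fun I => Un_cv (riemann_T2 g) I).

(* x^p for x >= 0, p > 0 (with 0^p = 0) *)
Definition rpow (x p : R) : R := if Rle_dec x 0 then 0 else Rpower x p.

Definition Lp_norm (p : R) (f : R -> R -> Cx) : R :=
  rpow (int_T2 (fun x1 x2 => rpow (Cmod (f x1 x2)) p)) (1 / p).

(* ---------- Fourier-side quantities of a velocity field ----------
   v : Z2 -> Cx * Cx are the Fourier coefficients (hat u^1_k, hat u^2_k). *)
Definition VField : Type := Z2 -> (Cx * Cx).

(* vorticity coefficient: curl v = d1 v^2 - d2 v^1 *)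
Definition omhat (v : VField) (k : Z2) : Cx :=
  Cmul Ci (Csub (Cscale (IZR (fst k)) (snd (v k))) (Cscale (IZR (snd k)) (fst (v k)))).

Definition adv (v : VField) (j l : Z2) : Cx :=
  Cmul Ci (Cadd (Cscale (IZR (fst l)) (fst (v j))) (Cscale (IZR (snd l)) (snd (v j)))).

(* Fourier coefficient at k of (v . grad omega), v supported in box N *)
Definition NLw (N : nat) (v : VField) (k : Z2) : Cx :=
  Csum (box N) (fun j => Cmul (adv v j (ksub k j)) (omhat v (ksub k j))).

(* Fourier coefficient at k of (v . grad v), v supported in box N *)
Definition NLu (N : nat) (v : VField) (k : Z2) : Cx * Cx :=
  (Csum (box N) (fun j => Cmul (adv v j (ksub k j)) (fst (v (ksub k j)))),
   Csum (box N) (fun j => Cmul (adv v j (ksub k j)) (snd (v (ksub k j))))).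

Definition vort_fun (N : nat) (v : VField) : R -> R -> Cx :=
  trig_eval N (omhat v).

(* (I - P_N)(v . grad omega) as a function on T^2 (the product has degree <= 2N) *)
Definition high_nl_fun (N : nat) (v : VField) : R -> R -> Cx :=
  trig_eval (2 * N)
    (fun k => if (kinf k <=? Z.of_nat N)%Z then C0 else NLw N v k).

Definition Cderiv (f : R -> Cx) (t : R) (d : Cx) : Prop :=
  derivable_pt_lim (fun s => fst (f s)) t (fst d) /\
  derivable_pt_lim (fun s => snd (f s)) t (snd d).

Definition Cright_cont0 (f : R -> Cx) : Prop :=
  forall eps, eps > 0 -> exists delta, delta > 0 /\
    forall s, 0 <= s < delta -> Cmod (Csub (f s) (f 0)) < eps.

(* Main.v *)
Require Import Defs.
From Stdlib Require Import Reals Lra Lia ZArith List ClassicalEpsilon Classical Permutation.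
Open Scope R_scope.

Ltac cxd := repeat match goal with z : Cx |- _ => destruct z end;
  unfold Csub, Cadd, Cmul, Copp, Cscale, Cconj, C0, Ci in *; simpl in *.
Ltac cx := cxd; f_equal; ring.

Lemma Cadd_0_l z : Cadd C0 z = z. Proof. cx. Qed.
Lemma Cadd_0_r z : Cadd z C0 = z. Proof. cx. Qed.
Lemma Cadd_comm z w : Cadd z w = Cadd w z. Proof. cx. Qed.
Lemma Cadd_assoc z w u : Cadd z (Cadd w u) = Cadd (Cadd z w) u. Proof. cx. Qed.
Lemma Cmul_0_r z : Cmul z C0 = C0. Proof. cx. Qed.
Lemma Cmul_0_l z : Cmul C0 z = C0. Proof. cx. Qed.

Lemma Csum_app {A} (l1 l2 : list A) f : Csum (l1 ++ l2) f = Cadd (Csum l1 f) (Csum l2 f).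
Proof. induction l1; simpl. rewrite Cadd_0_l; auto. rewrite IHl1, Cadd_assoc; auto. Qed.

Lemma Csum_ext {A} (l : list A) f g : (forall x, In x l -> f x = g x) -> Csum l f = Csum l g.
Proof. induction l; simpl; intros H; auto. rewrite H by auto. rewrite IHl; auto. Qed.

Lemma Csum_add {A} (l : list A) f g :
  Csum l (fun x => Cadd (f x) (g x)) = Cadd (Csum l f) (Csum l g).
Proof. induction l; simpl. cx. rewrite IHl. cx. Qed.

Lemma Csum_mul_l {A} (l : list A) c f :
  Cmul c (Csum l f) = Csum l (fun x => Cmul c (f x)).
Proof. induction l; simpl. cx. rewrite <- IHl. cx. Qed.

Lemma Csum_mul_r {A} (l : list A) c f :
  Cmul (Csum l f) c = Csum l (fun x => Cmul (f x) c).
Proof. induction l; simpl. cx. rewrite <- IHl. cx. Qed.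

Lemma Csum_opp {A} (l : list A) f : Csum l (fun x => Copp (f x)) = Copp (Csum l f).
Proof. induction l; simpl. cx. rewrite IHl. cx. Qed.

Lemma Csum_zero {A} (l : list A) f : (forall x, In x l -> f x = C0) -> Csum l f = C0.
Proof. induction l; simpl; intros H; auto. rewrite H, IHl by auto. cx. Qed.

Lemma Csum_swap {A B} (l1 : list A) (l2 : list B) g :
  Csum l1 (fun a => Csum l2 (fun b => g a b)) = Csum l2 (fun b => Csum l1 (fun a => g a b)).
Proof.
  induction l1; simpl. symmetry; apply Csum_zero; auto.
  rewrite IHl1, <- Csum_add. auto.
Qed.

Lemma Csum_perm {A} (l l' : list A) f : Permutation l l' -> Csum l f = Csum l' f.
Proof.
  induction 1; simpl; auto. rewrite IHPermutation; auto.
  rewrite !Cadd_assoc, (Cadd_comm (f y)); auto. congruence.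
Qed.

Lemma Csum_map {A B} (l : list A) (h : A -> B) f : Csum (map h l) f = Csum l (fun x => f (h x)).
Proof. induction l; simpl; auto. rewrite IHl; auto. Qed.

Lemma Csum_support {A} (l1 l2 : list A) f : NoDup l1 -> NoDup l2 ->
  (forall x, f x <> C0 -> (In x l1 <-> In x l2)) -> Csum l1 f = Csum l2 f.
Proof.
  revert l2; induction l1 as [|a l1 IH]; intros l2 N1 N2 H; simpl.
  - symmetry; apply Csum_zero. intros x Hx. destruct (classic (f x = C0)); auto.
    apply H in H0. apply H0 in Hx. destruct Hx.
  - inversion N1; subst. destruct (classic (f a = C0)) as [E|E].
    + rewrite E, Cadd_0_l. apply IH; auto. intros x Hx. rewrite <- H by auto.
      split; [simpl; auto|]. intros [->|]; auto. congruence.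
    + assert (Ha : In a l2) by (apply H; simpl; auto).
      destruct (in_split _ _ Ha) as [l2a [l2b ->]].
      apply NoDup_remove in N2. destruct N2 as [N2 Nn].
      rewrite Csum_app. simpl. rewrite (IH (l2a ++ l2b)); auto.
      rewrite Csum_app. rewrite !Cadd_assoc, (Cadd_comm (f a)). auto.
      intros x Hx. specialize (H x Hx). simpl in H. rewrite !in_app_iff in *. simpl in H.
      split; intro K.
      * assert (x <> a) by (intro; subst; contradiction).
        destruct (proj1 H (or_intror K)) as [|[|]]; auto. congruence.
      * assert (x <> a) by (intro; subst; tauto).
        assert (HH: a = x \/ In x l1). { apply H. destruct K; auto. }
        destruct HH; auto. congruence.
Qed.

Lemma NoDup_map_inj {A B} (h : A -> B) l : (forall x y, h x = h y -> x = y) -> NoDup l -> NoDup (map h l).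
Proof. intros Hi; induction 1; simpl; constructor; auto. rewrite in_map_iff. intros [y [E Hy]].
  apply Hi in E; subst; auto. Qed.

Lemma Csum_invol {A} (l : list A) (phi : A -> A) f : NoDup l -> (forall x, phi (phi x) = x) ->
  (forall x, f x <> C0 -> In x l) -> (forall x, f (phi x) <> C0 -> In x l) ->
  Csum l (fun x => f (phi x)) = Csum l f.
Proof.
  intros N Hp H1 H2. rewrite <- Csum_map. apply Csum_support; auto.
  apply NoDup_map_inj; auto. intros x y E. rewrite <- (Hp x), E, Hp; auto.
  intros x Hx. rewrite in_map_iff. split.
  - intros [y [<- Hy]]. auto.
  - intros _. exists (phi x); split; auto. apply H2. rewrite Hp. auto.
Qed.

Lemma Rsum_ext {A} (l : list A) f g : (forall x, In x l -> f x = g x) -> Rsum l f = Rsum l g.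
Proof. induction l; simpl; intros H; auto. rewrite H by auto. rewrite IHl; auto. Qed.
Lemma Rsum_le {A} (l : list A) f g : (forall x, In x l -> f x <= g x) -> Rsum l f <= Rsum l g.
Proof. induction l; simpl; intros H. lra. pose proof (H a (or_introl eq_refl)).
  pose proof (IHl (fun x Hx => H x (or_intror Hx))). lra. Qed.
Lemma Rsum_const {A} (l : list A) c : Rsum l (fun _ => c) = INR (length l) * c.
Proof. induction l; simpl length. simpl; ring. rewrite S_INR. simpl. rewrite IHl. ring. Qed.
Lemma Rsum_nonneg {A} (l : list A) f : (forall x, In x l -> 0 <= f x) -> 0 <= Rsum l f.
Proof. intros H. apply Rle_trans with (Rsum l (fun _ => 0)). rewrite Rsum_const; lra. apply Rsum_le; auto. Qed.
Lemma Rsum_add {A} (l : list A) f g : Rsum l (fun x => f x + g x) = Rsum l f + Rsum l g.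
Proof. induction l; simpl. ring. rewrite IHl; ring. Qed.
Lemma Rsum_scal {A} (l : list A) c f : Rsum l (fun x => c * f x) = c * Rsum l f.
Proof. induction l; simpl. ring. rewrite IHl; ring. Qed.
Lemma Rsum_term_le {A} (l : list A) f a : (forall x, In x l -> 0 <= f x) -> In a l -> f a <= Rsum l f.
Proof. induction l; simpl; intros H Ha. destruct Ha. destruct Ha as [->|Ha].
  pose proof (Rsum_nonneg l f (fun x Hx => H x (or_intror Hx))). lra.
  pose proof (H a0 (or_introl eq_refl)). pose proof (IHl (fun x Hx => H x (or_intror Hx)) Ha). lra. Qed.

Lemma Cmod_ge0 z : 0 <= Cmod z. Proof. apply sqrt_pos. Qed.
Lemma Cmod_sq z : Cmod z ^ 2 = fst z ^ 2 + snd z ^ 2.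
Proof. unfold Cmod. rewrite pow2_sqrt; auto. nra. Qed.
Lemma Cmod_fst z : Rabs (fst z) <= Cmod z.
Proof. unfold Cmod. rewrite <- sqrt_Rsqr_abs. apply sqrt_le_1_alt. unfold Rsqr. nra. Qed.
Lemma Cmod_snd z : Rabs (snd z) <= Cmod z.
Proof. unfold Cmod. rewrite <- sqrt_Rsqr_abs. apply sqrt_le_1_alt. unfold Rsqr. nra. Qed.
Lemma Cmod_le_sum z : Cmod z <= Rabs (fst z) + Rabs (snd z).
Proof. unfold Cmod. rewrite <- (sqrt_square (Rabs (fst z) + Rabs (snd z))) by (pose proof (Rabs_pos (fst z)); pose proof (Rabs_pos (snd z)); lra).
  apply sqrt_le_1_alt. pose proof (Rabs_pos (fst z)); pose proof (Rabs_pos (snd z)).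
  rewrite <- (pow2_abs (fst z)), <- (pow2_abs (snd z)). nra. Qed.
Lemma Cmod_C0 : Cmod C0 = 0.
Proof. unfold Cmod, C0; cbn [fst snd]. replace (0^2+0^2) with 0 by ring. apply sqrt_0. Qed.
Lemma Cmod_mul z w : Cmod (Cmul z w) = Cmod z * Cmod w.
Proof. unfold Cmod. rewrite <- sqrt_mult by nra. f_equal. destruct z, w; unfold Cmul; simpl. ring. Qed.
Lemma Cmod_scale r z : Cmod (Cscale r z) = Rabs r * Cmod z.
Proof. unfold Cmod. rewrite <- sqrt_Rsqr_abs. rewrite <- sqrt_mult by (unfold Rsqr; nra). f_equal.
  destruct z; unfold Cscale, Rsqr; simpl. ring. Qed.
Lemma Cmod_opp z : Cmod (Copp z) = Cmod z.
Proof. unfold Cmod. destruct z; simpl. f_equal; ring. Qed.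
Lemma Cmod_Ci z : Cmod (Cmul Ci z) = Cmod z.
Proof. rewrite Cmod_mul. unfold Cmod at 1, Ci; cbn [fst snd]. replace (0^2+1^2) with 1 by ring. rewrite sqrt_1; ring. Qed.
Lemma Cmod_conj z : Cmod (Cconj z) = Cmod z.
Proof. unfold Cmod. destruct z; simpl. f_equal; ring. Qed.
Lemma Cmod_expi th : Cmod (Cexpi th) = 1.
Proof. unfold Cmod, Cexpi; cbn [fst snd]. rewrite <- sqrt_1. f_equal. pose proof (sin2_cos2 th). unfold Rsqr in *. nra. Qed.

Lemma Cmod_add z w : Cmod (Cadd z w) <= Cmod z + Cmod w.
Proof.
  pose proof (Cmod_ge0 z); pose proof (Cmod_ge0 w).
  unfold Cmod at 1. rewrite <- (sqrt_square (Cmod z + Cmod w)) by lra.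
  apply sqrt_le_1_alt.
  assert (Hz := Cmod_sq z). assert (Hw := Cmod_sq w).
  destruct z as [a b], w as [c d]; unfold Cadd in *; cbn [fst snd] in *.
  assert (CS : a*c + b*d <= Cmod (a,b) * Cmod (c,d)).
  { destruct (Rle_dec (a*c+b*d) 0). nra.
    assert ((a*c+b*d)^2 <= (Cmod (a,b) * Cmod (c,d))^2).
    { rewrite Rpow_mult_distr, Hz, Hw. pose proof (pow2_ge_0 (a*d-b*c)). nra. }
    apply Rsqr_incr_0_var. unfold Rsqr in *; nra. nra. }
  nra.
Qed.

Lemma Cmod_sub z w : Cmod (Csub z w) <= Cmod z + Cmod w.
Proof. unfold Csub. rewrite <- (Cmod_opp w). apply Cmod_add. Qed.

Lemma Cmod_Csum {A} (l : list A) f : Cmod (Csum l f) <= Rsum l (fun x => Cmod (f x)).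
Proof. induction l; simpl. rewrite Cmod_C0; lra. eapply Rle_trans. apply Cmod_add. lra. Qed.

Lemma Cmod_Csum_bound {A} (l : list A) f c : (forall x, In x l -> Cmod (f x) <= c) ->
  Cmod (Csum l f) <= INR (length l) * c.
Proof. intros H. eapply Rle_trans. apply Cmod_Csum. rewrite <- Rsum_const. apply Rsum_le; auto. Qed.

Lemma Cmod_eq0 z : Cmod z = 0 -> z = C0.
Proof. intros H. assert (Cmod z ^ 2 = 0) by (rewrite H; ring). rewrite Cmod_sq in H0.
  destruct z; unfold C0; simpl in *. f_equal; nra. Qed.

Lemma In_zrange M x : In x (zrange M) <-> (- Z.of_nat M <= x <= Z.of_nat M)%Z.
Proof.
  unfold zrange. rewrite in_map_iff. split.
  - intros [i [<- Hi]]. rewrite in_seq in Hi. lia.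
  - intros H. exists (Z.to_nat (x + Z.of_nat M)). split. lia. rewrite in_seq. lia.
Qed.

Lemma NoDup_zrange M : NoDup (zrange M).
Proof. apply NoDup_map_inj. intros; lia. apply seq_NoDup. Qed.

Lemma length_zrange M : length (zrange M) = (2 * M + 1)%nat.
Proof. unfold zrange. rewrite length_map, length_seq. auto. Qed.

Lemma NoDup_prod {A B} (l : list A) (l' : list B) : NoDup l -> NoDup l' -> NoDup (list_prod l l').
Proof.
  intros N N'. induction N; simpl. constructor.
  apply NoDup_app; auto. apply NoDup_map_inj; auto. intros u v E; inversion E; auto.
  intros [a b] H1 H2. rewrite in_map_iff in H1. destruct H1 as [y [E _]]. inversion E; subst.
  rewrite in_prod_iff in H2. tauto.
Qed.

Lemma In_box M k : In k (box M) <-> (kinf k <= Z.of_nat M)%Z.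
Proof. destruct k as [k1 k2]. change (In (k1,k2) (list_prod (zrange M) (zrange M)) <-> (kinf (k1,k2) <= Z.of_nat M)%Z). rewrite in_prod_iff, !In_zrange. unfold kinf; simpl. lia. Qed.

Lemma NoDup_box M : NoDup (box M).
Proof. apply NoDup_prod; apply NoDup_zrange. Qed.

Lemma length_box M : INR (length (box M)) = (2 * INR M + 1) ^ 2.
Proof. change (INR (length (list_prod (zrange M) (zrange M))) = (2 * INR M + 1) ^ 2). rewrite length_prod, length_zrange, mult_INR, plus_INR, mult_INR. simpl. ring. Qed.

Lemma knorm_ge_kinf k : IZR (kinf k) <= knorm k.
Proof.
  destruct k as [a b]. unfold knorm, knorm2, kinf. simpl.
  rewrite <- (sqrt_square (IZR (Z.max (Z.abs a) (Z.abs b)))) by (apply IZR_le; lia).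
  apply sqrt_le_1_alt. rewrite <- mult_IZR. apply IZR_le.
  destruct (Z.max_spec (Z.abs a) (Z.abs b)) as [[_ ->]|[_ ->]]; nia.
Qed.

Lemma knorm_ge_abs1 k : Rabs (IZR (fst k)) <= knorm k.
Proof. eapply Rle_trans; [|apply knorm_ge_kinf]. rewrite <- abs_IZR. apply IZR_le. unfold kinf; lia. Qed.
Lemma knorm_ge_abs2 k : Rabs (IZR (snd k)) <= knorm k.
Proof. eapply Rle_trans; [|apply knorm_ge_kinf]. rewrite <- abs_IZR. apply IZR_le. unfold kinf; lia. Qed.

Lemma knorm2_ge1 k : k <> k0 -> 1 <= knorm2 k.
Proof. destruct k as [a b]; unfold knorm2, k0; simpl; intros H. apply IZR_le.
  destruct (Z.eq_dec a 0); destruct (Z.eq_dec b 0); subst; try congruence; nia. Qed.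

Lemma kinf_abs1 k : (Z.abs (fst k) <= kinf k)%Z. Proof. unfold kinf; lia. Qed.
Lemma kinf_abs2 k : (Z.abs (snd k) <= kinf k)%Z. Proof. unfold kinf; lia. Qed.

Definition divfree (v : VField) := forall k, Cadd (Cscale (IZR (fst k)) (fst (v k)))
          (Cscale (IZR (snd k)) (snd (v k))) = C0.

Lemma omhat_sq v j : Cadd (Cscale (IZR (fst j)) (fst (v j))) (Cscale (IZR (snd j)) (snd (v j))) = C0 ->
  Cmod (omhat v j) ^ 2 = knorm2 j * (Cmod (fst (v j)) ^ 2 + Cmod (snd (v j)) ^ 2).
Proof.
  unfold omhat, knorm2. rewrite plus_IZR, !mult_IZR, !Cmod_sq.
  destruct (v j) as [[a b] [c d]]; destruct j as [p q]; unfold Cadd, Cscale, Cmul, Csub, Copp, Ci, C0; cbn [fst snd].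
  intros E. assert (E1 := f_equal fst E); assert (E2 := f_equal snd E); cbn [fst snd] in E1, E2.
  set (P := IZR p) in *; set (Q := IZR q) in *.
  unfold Cadd; cbn [fst snd].
  transitivity ((P*P+Q*Q)*(a^2+b^2+(c^2+d^2)) - (P*a+Q*c)^2 - (P*b+Q*d)^2); [ring|].
  rewrite E1, E2. ring.
Qed.

Lemma uhat_le_om v j : Cadd (Cscale (IZR (fst j)) (fst (v j))) (Cscale (IZR (snd j)) (snd (v j))) = C0 ->
  (j = k0 -> v j = (C0, C0)) ->
  Cmod (fst (v j)) <= Cmod (omhat v j) /\ Cmod (snd (v j)) <= Cmod (omhat v j).
Proof.
  intros D Z. destruct (classic (j = k0)) as [E|E].
  - rewrite (Z E). simpl. rewrite Cmod_C0. split; apply Cmod_ge0.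
  - pose proof (omhat_sq v j D) as S. pose proof (knorm2_ge1 j E).
    pose proof (Cmod_ge0 (fst (v j))). pose proof (Cmod_ge0 (snd (v j))). pose proof (Cmod_ge0 (omhat v j)).
    pose proof (pow2_ge_0 (Cmod (fst (v j)))). pose proof (pow2_ge_0 (Cmod (snd (v j)))).
    split; apply Rsqr_incr_0_var; unfold Rsqr; nra.
Qed.

Lemma omhat_zero v l : v l = (C0, C0) -> omhat v l = C0.
Proof. intros E; unfold omhat; rewrite E; cx. Qed.

Lemma kinf_tri k j : (kinf k <= kinf j + kinf (ksub k j))%Z.
Proof. destruct k, j; unfold kinf, ksub; simpl. lia. Qed.

Lemma trig_eval_bound M c x1 x2 : Cmod (trig_eval M c x1 x2) <= Rsum (box M) (fun k => Cmod (c k)).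
Proof. unfold trig_eval. eapply Rle_trans. apply Cmod_Csum. apply Rsum_le. intros k _.
  rewrite Cmod_mul, Cmod_expi. lra. Qed.

Section Core.
Variables (N : nat) (v : VField) (W D : R).
Hypothesis Hsupp : forall l, (kinf l > Z.of_nat N)%Z \/ l = k0 -> v l = (C0, C0).
Hypothesis Hdiv : divfree v.
Hypothesis HW : forall l, Cmod (omhat v l) <= W.
Hypothesis HD : forall l, knorm l >= INR N / 2 -> Cmod (omhat v l) <= D.

Lemma adv_bound j l : (kinf l <= Z.of_nat N)%Z -> Cmod (adv v j l) <= 2 * INR N * Cmod (omhat v j).
Proof.
  intros Hl. unfold adv. rewrite Cmod_Ci. eapply Rle_trans. apply Cmod_add.
  rewrite !Cmod_scale. destruct (uhat_le_om v j (Hdiv j) (fun E => Hsupp j (or_intror E))) as [U1 U2].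
  assert (A1 : Rabs (IZR (fst l)) <= INR N).
  { rewrite <- abs_IZR, INR_IZR_INZ. apply IZR_le. pose proof (kinf_abs1 l); lia. }
  assert (A2 : Rabs (IZR (snd l)) <= INR N).
  { rewrite <- abs_IZR, INR_IZR_INZ. apply IZR_le. pose proof (kinf_abs2 l); lia. }
  pose proof (Cmod_ge0 (fst (v j))). pose proof (Cmod_ge0 (snd (v j))).
  pose proof (Rabs_pos (IZR (fst l))). pose proof (Rabs_pos (IZR (snd l))). nra.
Qed.

Lemma NLw_bound k : (kinf k > Z.of_nat N)%Z ->
  Cmod (NLw N v k) <= (2 * INR N + 1) ^ 2 * (2 * INR N * (W * D)).
Proof.
  intros Hk. unfold NLw. rewrite <- length_box. apply Cmod_Csum_bound.
  intros j Hj. rewrite In_box in Hj. set (l := ksub k j).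
  destruct (classic (kinf l > Z.of_nat N)%Z) as [Hl|Hl].
  - rewrite (omhat_zero v l (Hsupp l (or_introl Hl))), Cmul_0_r, Cmod_C0.
    pose proof (Cmod_ge0 (omhat v k0)). pose proof (HW k0).
    assert (0 <= D). { apply Rle_trans with (Cmod (omhat v (Z.of_nat N + 1, 0)%Z)). apply Cmod_ge0.
      apply HD. eapply Rge_trans; [apply Rle_ge, knorm_ge_kinf|]. unfold kinf; simpl.
      rewrite Z.max_l by lia. rewrite Z.abs_eq by lia. rewrite plus_IZR, <- INR_IZR_INZ.
      pose proof (pos_INR N). lra. }
    pose proof (pos_INR N). apply Rmult_le_pos; [lra|]. apply Rmult_le_pos; nra.
  - rewrite Cmod_mul. pose proof (adv_bound j l ltac:(lia)).
    pose proof (kinf_tri k j). fold l in H0.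
    pose proof (Cmod_ge0 (omhat v j)). pose proof (Cmod_ge0 (omhat v l)).
    pose proof (HW j). pose proof (HW l). pose proof (pos_INR N).
    assert (Cmod (omhat v j) * Cmod (omhat v l) <= W * D).
    { destruct (Z_le_gt_dec (kinf j + kinf j) (Z.of_nat N)) as [Hj'|Hj'].
      - assert (knorm l >= INR N / 2).
        { apply Rle_ge. eapply Rle_trans; [|apply knorm_ge_kinf].
          apply Rmult_le_reg_l with 2. lra. replace (2 * (INR N / 2)) with (INR N) by field.
          rewrite INR_IZR_INZ, <- mult_IZR. apply IZR_le. lia. }
        specialize (HD l H6). nra.
      - assert (knorm j >= INR N / 2).
        { apply Rle_ge. eapply Rle_trans; [|apply knorm_ge_kinf].
          apply Rmult_le_reg_l with 2. lra. replace (2 * (INR N / 2)) with (INR N) by field.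
          rewrite INR_IZR_INZ, <- mult_IZR. apply IZR_le. lia. }
        specialize (HD j H6). nra. }
    nra.
Qed.

Lemma high_bound x1 x2 :
  Cmod (high_nl_fun N v x1 x2) <= (4 * INR N + 1) ^ 2 * ((2 * INR N + 1) ^ 2 * (2 * INR N * (W * D))).
Proof.
  unfold high_nl_fun. eapply Rle_trans. apply trig_eval_bound.
  replace (4 * INR N + 1) with (2 * INR (2 * N) + 1) by (rewrite mult_INR; simpl; ring).
  rewrite <- length_box, <- Rsum_const. apply Rsum_le. intros k _.
  destruct (Z.leb_spec (kinf k) (Z.of_nat N)).
  - rewrite Cmod_C0. assert (0 <= Cmod (NLw N v (Z.of_nat N + 1, 0)%Z)) by apply Cmod_ge0.
    eapply Rle_trans. apply H0. apply NLw_bound. unfold kinf; simpl. lia.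
  - apply NLw_bound. lia.
Qed.
End Core.

Fixpoint sN (f : nat -> R) (n : nat) : R := match n with O => 0 | S n => sN f n + f n end.

Lemma sN_R0 f n : sum_f_R0 f n = sN f (S n).
Proof. induction n; simpl. ring. rewrite IHn. simpl. ring. Qed.

Lemma sN_add f a b : sN f (a + b) = sN f a + sN (fun i => f (a + i)%nat) b.
Proof. induction b; simpl. rewrite Nat.add_0_r; ring. rewrite Nat.add_succ_r. simpl. rewrite IHb. ring. Qed.

Lemma sN_ext f g n : (forall i, (i < n)%nat -> f i = g i) -> sN f n = sN g n.
Proof. induction n; simpl; intros H; auto. rewrite IHn, H; auto. Qed.

Lemma sN_le f g n : (forall i, (i < n)%nat -> f i <= g i) -> sN f n <= sN g n.
Proof. induction n; simpl; intros H. lra. pose proof (H n ltac:(lia)). pose proof (IHn (fun i Hi => H i ltac:(lia))). lra. Qed.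

Lemma sN_const c n : sN (fun _ => c) n = INR n * c.
Proof. induction n; simpl sN. simpl; ring. rewrite IHn, S_INR; ring. Qed.

Lemma sN_minus f g n : sN (fun i => f i - g i) n = sN f n - sN g n.
Proof. induction n; simpl. ring. rewrite IHn; ring. Qed.

Lemma sN_scal c f n : sN (fun i => c * f i) n = c * sN f n.
Proof. induction n; simpl. ring. rewrite IHn; ring. Qed.

Lemma sN_abs f n : Rabs (sN f n) <= sN (fun i => Rabs (f i)) n.
Proof. induction n; simpl. rewrite Rabs_R0; lra. eapply Rle_trans. apply Rabs_triang. lra. Qed.

Lemma sN_block F K m : (0 < K)%nat -> sN (fun i => F (i / K)%nat) (K * m) = INR K * sN F m.
Proof.
  intros HK. induction m. rewrite Nat.mul_0_r; simpl; ring.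
  replace (K * S m)%nat with (K * m + K)%nat by lia. rewrite sN_add, IHm.
  rewrite (sN_ext (fun i => F ((K*m+i)/K)%nat) (fun _ => F m)). rewrite sN_const. change (sN F (S m)) with (sN F m + F m). ring.
  intros i Hi. f_equal. rewrite Nat.mul_comm, Nat.div_add_l by lia. rewrite Nat.div_small by lia. lia.
Qed.

Definition UC (g : R -> R -> R) := forall e, e > 0 -> exists d, d > 0 /\
  forall x1 x2 y1 y2, Rabs (x1 - y1) <= d -> Rabs (x2 - y2) <= d -> Rabs (g x1 x2 - g y1 y2) <= e.

Definition gp (n a : nat) : R := 2 * PI * INR a / INR (S n).

Lemma riemann_sN g n : riemann_T2 g n =
  (2 * PI / INR (S n)) ^ 2 * sN (fun a => sN (fun b => g (gp n a) (gp n b)) (S n)) (S n).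
Proof. unfold riemann_T2, gp. rewrite sN_R0. f_equal. apply sN_ext. intros; apply sN_R0. Qed.

Lemma gp_close n K i : (0 < K)%nat -> Rabs (gp (K * S n - 1) i - gp n (i / K)) <= 2 * PI / INR (S n).
Proof.
  intros HK. unfold gp. replace (S (K * S n - 1)) with (K * S n)%nat by lia.
  pose proof (Nat.div_mod i K ltac:(lia)) as Hd.
  pose proof (Nat.mod_upper_bound i K ltac:(lia)) as Hm.
  set (q := (i / K)%nat) in *; set (r := (i mod K)%nat) in *.
  assert (Ei : INR i = INR K * INR q + INR r) by (rewrite Hd at 1; rewrite plus_INR, mult_INR; ring).
  assert (Hr : INR r + 1 <= INR K) by (rewrite <- S_INR; apply le_INR; lia).
  pose proof (pos_INR r). pose proof PI_RGT_0.
  assert (HK' : 0 < INR K) by (apply lt_0_INR; lia). assert (Hn : 0 < INR (S n)) by (apply lt_0_INR; lia).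
  rewrite mult_INR, Ei.
  replace (2 * PI * (INR K * INR q + INR r) / (INR K * INR (S n)) - 2 * PI * INR q / INR (S n))
    with (2 * PI / INR (S n) * (INR r / INR K)) by (field; lra).
  assert (HA: 0 < 2*PI/INR(S n)) by (apply Rdiv_lt_0_compat; lra).
  assert (Hq1: INR r / INR K <= 1).
  { apply Rmult_le_reg_r with (INR K); [lra|]. unfold Rdiv; rewrite Rmult_assoc, Rinv_l; lra. }
  assert (Hq0: 0 <= INR r / INR K) by (apply Rmult_le_pos; [lra|apply Rlt_le, Rinv_0_lt_compat; lra]).
  rewrite Rabs_pos_eq by nra. nra.
Qed.

Lemma refine g n K e : (0 < K)%nat ->
  (forall x1 x2 y1 y2, Rabs (x1 - y1) <= 2 * PI / INR (S n) -> Rabs (x2 - y2) <= 2 * PI / INR (S n) ->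
     Rabs (g x1 x2 - g y1 y2) <= e) ->
  Rabs (riemann_T2 g (K * S n - 1) - riemann_T2 g n) <= 4 * PI ^ 2 * e.
Proof.
  intros HK Hg. rewrite !riemann_sN.
  set (n' := (K * S n - 1)%nat). assert (E' : S n' = (K * S n)%nat) by (unfold n'; lia).
  rewrite E'.
  set (G := fun a b => g (gp n (a / K)%nat) (gp n (b / K)%nat)).
  assert (HG : sN (fun a => sN (fun b => G a b) (K * S n)) (K * S n) =
               INR K * INR K * sN (fun a => sN (fun b => g (gp n a) (gp n b)) (S n)) (S n)).
  { unfold G. rewrite (sN_ext _ (fun a => INR K * (fun a0 => sN (fun b => g (gp n a0) (gp n b)) (S n)) (a / K)%nat)).
    pose proof (sN_block (fun a0 => sN (fun b => g (gp n a0) (gp n b)) (S n)) K (S n) HK) as HB.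
    cbv beta in HB. rewrite sN_scal, HB. ring.
    intros a _. apply (sN_block (fun b => g (gp n (a / K)%nat) (gp n b))); auto. }
  assert (HK' : 0 < INR K) by (apply lt_0_INR; lia). assert (Hn : 0 < INR (S n)) by (apply lt_0_INR; lia).
  assert (Eh : (2 * PI / INR (S n)) ^ 2 = (2 * PI / INR (K * S n)) ^ 2 * (INR K * INR K)).
  { rewrite mult_INR. field. lra. }
  rewrite Eh, Rmult_assoc, <- HG, <- Rmult_minus_distr_l.
  rewrite <- (sN_minus (fun a => sN (fun b => g (gp n' a) (gp n' b)) (K*S n)) (fun a => sN (fun b => G a b) (K*S n))).
  rewrite (sN_ext _ (fun a => sN (fun b => g (gp n' a) (gp n' b) - G a b) (K * S n))).
  2:{ intros; rewrite sN_minus; auto. }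
  rewrite Rabs_mult, Rabs_pos_eq by (apply pow2_ge_0).
  apply Rle_trans with ((2 * PI / INR (K * S n)) ^ 2 * sN (fun a => sN (fun b => e) (K * S n)) (K * S n)).
  - apply Rmult_le_compat_l. apply pow2_ge_0.
    eapply Rle_trans. apply sN_abs. apply sN_le. intros a Ha.
    eapply Rle_trans. apply sN_abs. apply sN_le. intros b Hb.
    unfold G, n'. apply Hg; apply gp_close; auto.
  - rewrite sN_const, sN_const. right. rewrite mult_INR. field. lra.
Qed.

Lemma mesh_small d : d > 0 -> exists N0, forall n, (n >= N0)%nat -> 2 * PI / INR (S n) <= d.
Proof.
  intros Hd. destruct (archimed (2 * PI / d)) as [H1 _].
  pose proof PI_RGT_0.
  assert (0 < 2 * PI / d) by (apply Rdiv_lt_0_compat; lra).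
  exists (Z.to_nat (up (2 * PI / d))). intros n Hn.
  assert (INR (S n) > 2 * PI / d).
  { apply Rlt_le_trans with (IZR (up (2*PI/d))); auto.
    rewrite INR_IZR_INZ. apply IZR_le. assert (0 < up (2*PI/d))%Z by (apply lt_IZR; lra). lia. }
  assert (E1 : (2*PI/d)*d = 2*PI) by (field; lra).
  assert (E2 : (2*PI/INR (S n))*INR (S n) = 2*PI) by (field; lra).
  assert (INR (S n) * d > 2 * PI) by nra.
  apply Rmult_le_reg_r with (INR (S n)). lra. nra.
Qed.

Lemma abs_le_split x a : Rabs x <= a -> -a <= x <= a.
Proof. unfold Rabs; destruct Rcase_abs; lra. Qed.

Lemma riemann_cauchy g : UC g -> Cauchy_crit (riemann_T2 g).
Proof.
  intros Hg eps Heps. pose proof PI_RGT_0.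
  destruct (Hg (eps / (16 * PI ^ 2))) as [d [Hd Hgd]]. apply Rdiv_lt_0_compat; nra.
  destruct (mesh_small d Hd) as [N0 HN0]. exists N0. intros n m Hn Hm. unfold R_dist.
  pose proof (refine g n (S m) (eps / (16 * PI ^ 2)) ltac:(lia)) as R1.
  pose proof (refine g m (S n) (eps / (16 * PI ^ 2)) ltac:(lia)) as R2.
  rewrite Nat.mul_comm in R2.
  assert (A1 : Rabs (riemann_T2 g (S m * S n - 1) - riemann_T2 g n) <= 4 * PI ^ 2 * (eps / (16 * PI ^ 2))).
  { apply R1. intros; apply Hgd; eapply Rle_trans; eauto. }
  assert (A2 : Rabs (riemann_T2 g (S m * S n - 1) - riemann_T2 g m) <= 4 * PI ^ 2 * (eps / (16 * PI ^ 2))).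
  { apply R2. intros; apply Hgd; eapply Rle_trans; eauto. }
  replace (4 * PI ^ 2 * (eps / (16 * PI ^ 2))) with (eps / 4) in A1, A2 by (field; lra).
  apply abs_le_split in A1; apply abs_le_split in A2. apply Rabs_def1; lra.
Qed.

Lemma riemann_cv g : UC g -> Un_cv (riemann_T2 g) (int_T2 g).
Proof.
  intros Hg. destruct (R_complete _ (riemann_cauchy g Hg)) as [l Hl].
  unfold int_T2. apply epsilon_spec. exists l; auto.
Qed.

Lemma cv_le u l c n0 : Un_cv u l -> (forall n, (n >= n0)%nat -> u n <= c) -> l <= c.
Proof.
  intros Hu Hc. destruct (Rle_dec l c); auto. exfalso.
  destruct (Hu (l - c)) as [N HN]. lra.
  specialize (HN (max N n0) ltac:(lia)). specialize (Hc (max N n0) ltac:(lia)).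
  unfold R_dist in HN. apply Rabs_def2 in HN. lra.
Qed.

Lemma cv_ge u l c n0 : Un_cv u l -> (forall n, (n >= n0)%nat -> c <= u n) -> c <= l.
Proof.
  intros Hu Hc. destruct (Rle_dec c l); auto. exfalso.
  destruct (Hu (c - l)) as [N HN]. lra.
  specialize (HN (max N n0) ltac:(lia)). specialize (Hc (max N n0) ltac:(lia)).
  unfold R_dist in HN. apply Rabs_def2 in HN. lra.
Qed.

Lemma sin_lip a b : Rabs (sin a - sin b) <= Rabs (a - b).
Proof. destruct (MVT_abs sin cos b a) as [c [E _]]. intros; apply derivable_pt_lim_sin.
  rewrite E. pose proof (COS_bound c). assert (Rabs (cos c) <= 1) by (unfold Rabs; destruct Rcase_abs; lra).
  pose proof (Rabs_pos (a - b)). nra. Qed.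
Lemma cos_lip a b : Rabs (cos a - cos b) <= Rabs (a - b).
Proof. destruct (MVT_abs cos (fun x => - sin x) b a) as [c [E _]]. intros; apply derivable_pt_lim_cos.
  rewrite E. pose proof (SIN_bound c). assert (Rabs (- sin c) <= 1) by (unfold Rabs; destruct Rcase_abs; lra).
  pose proof (Rabs_pos (a - b)). nra. Qed.

Lemma expi_lip a b : Cmod (Csub (Cexpi a) (Cexpi b)) <= 2 * Rabs (a - b).
Proof. eapply Rle_trans. apply Cmod_le_sum. unfold Csub, Cadd, Copp, Cexpi; cbn [fst snd].
  pose proof (sin_lip a b); pose proof (cos_lip a b). unfold Rminus in *. lra. Qed.

Lemma Csum_sub {A} (l : list A) f g : Csub (Csum l f) (Csum l g) = Csum l (fun x => Csub (f x) (g x)).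
Proof. induction l; simpl. cx. rewrite <- IHl. cx. Qed.

Lemma Cmod_diff z w : Rabs (Cmod z - Cmod w) <= Cmod (Csub z w).
Proof.
  assert (A1 : Cmod z <= Cmod (Csub z w) + Cmod w).
  { replace z with (Cadd (Csub z w) w) at 1 by cx. apply Cmod_add. }
  assert (A2 : Cmod w <= Cmod (Csub z w) + Cmod z).
  { replace w with (Cadd (Copp (Csub z w)) z) at 1 by cx. rewrite <- (Cmod_opp (Csub z w)). apply Cmod_add. }
  unfold Rabs; destruct Rcase_abs; lra.
Qed.

Definition Lconst (M : nat) (c : Z2 -> Cx) : R :=
  Rsum (box M) (fun k => Cmod (c k) * (2 * (Rabs (IZR (fst k)) + Rabs (IZR (snd k))))).

Lemma trig_lip M c x1 x2 y1 y2 :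
  Cmod (Csub (trig_eval M c x1 x2) (trig_eval M c y1 y2)) <= Lconst M c * (Rabs (x1 - y1) + Rabs (x2 - y2)).
Proof.
  unfold trig_eval, Lconst. rewrite Csum_sub. eapply Rle_trans. apply Cmod_Csum.
  rewrite Rmult_comm, <- Rsum_scal. apply Rsum_le. intros k _.
  replace (Csub (Cmul (c k) (Cexpi (IZR (fst k) * x1 + IZR (snd k) * x2))) (Cmul (c k) (Cexpi (IZR (fst k) * y1 + IZR (snd k) * y2))))
    with (Cmul (c k) (Csub (Cexpi (IZR (fst k) * x1 + IZR (snd k) * x2)) (Cexpi (IZR (fst k) * y1 + IZR (snd k) * y2)))) by cx.
  rewrite Cmod_mul. pose proof (Cmod_ge0 (c k)).
  eapply Rle_trans. apply Rmult_le_compat_l; auto. apply expi_lip.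
  replace (IZR (fst k) * x1 + IZR (snd k) * x2 - (IZR (fst k) * y1 + IZR (snd k) * y2))
    with (IZR (fst k) * (x1 - y1) + IZR (snd k) * (x2 - y2)) by ring.
  pose proof (Rabs_triang (IZR (fst k) * (x1 - y1)) (IZR (snd k) * (x2 - y2))).
  rewrite !Rabs_mult in H0.
  pose proof (Rabs_pos (IZR (fst k))). pose proof (Rabs_pos (IZR (snd k))).
  pose proof (Rabs_pos (x1 - y1)). pose proof (Rabs_pos (x2 - y2)).
  apply Rle_trans with (Cmod (c k) * (2 * (Rabs (IZR (fst k)) * Rabs (x1 - y1) + Rabs (IZR (snd k)) * Rabs (x2 - y2)))).
  apply Rmult_le_compat_l; auto; lra.
  assert (0 <= Rabs (IZR (fst k)) * Rabs (x2 - y2) + Rabs (IZR (snd k)) * Rabs (x1 - y1)) by nra.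
  nra.
Qed.

Lemma rpow_pos x p : 0 < x -> rpow x p = Rpower x p.
Proof. intros H; unfold rpow; destruct Rle_dec; lra. Qed.
Lemma rpow_nonpos x p : x <= 0 -> rpow x p = 0.
Proof. intros H; unfold rpow; destruct Rle_dec; lra. Qed.
Lemma rpow_ge0 x p : 0 <= rpow x p.
Proof. unfold rpow; destruct Rle_dec. lra. unfold Rpower. apply Rlt_le, exp_pos. Qed.

Lemma rpow_mono x y p : 0 <= p -> 0 <= x <= y -> rpow x p <= rpow y p.
Proof.
  intros Hp [Hx Hxy]. destruct (Req_dec x 0). subst. rewrite rpow_nonpos by lra. apply rpow_ge0.
  rewrite !rpow_pos by lra. apply Rle_Rpower_l; lra.
Qed.

Lemma rpow_lip p M x y : 1 <= p -> 0 < M -> 0 <= x <= M -> 0 <= y <= M ->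
  Rabs (rpow x p - rpow y p) <= p * Rpower M (p - 1) * Rabs (x - y).
Proof.
  intros Hp HM.
  assert (key : forall x y, 0 <= x <= M -> 0 <= y <= M -> x <= y ->
    Rabs (rpow x p - rpow y p) <= p * Rpower M (p - 1) * Rabs (x - y)).
  { clear x y. intros x y Hx Hy Hxy. destruct (Req_dec x y). subst. rewrite !Rminus_diag, Rabs_R0.
    assert (0 < Rpower M (p-1)) by apply exp_pos. rewrite Rmult_0_r; lra.
    assert (Rpower y (p - 1) <= Rpower M (p - 1)) by (apply Rle_Rpower_l; lra).
    destruct (Req_dec x 0).
    - subst. rewrite rpow_nonpos by lra. rewrite rpow_pos by lra.
      replace (Rpower y p) with (y * Rpower y (p - 1)).
      2:{ rewrite <- (Rpower_1 y) at 1 by lra. rewrite <- Rpower_plus. f_equal; ring. }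
      assert (0 < Rpower y (p - 1)) by apply exp_pos.
      rewrite Rminus_0_l, Rabs_Ropp, Rabs_pos_eq by nra. rewrite Rminus_0_l, Rabs_Ropp, Rabs_pos_eq by lra.
      assert (0 <= y * (Rpower M (p-1) - Rpower y (p-1))) by nra.
      assert (0 < Rpower M (p-1)) by apply exp_pos.
      assert (0 <= (p-1) * (Rpower M (p-1) * y)) by (apply Rmult_le_pos; [lra|apply Rmult_le_pos; lra]). nra.
    - rewrite !rpow_pos by lra.
      destruct (MVT_cor2 (fun t => Rpower t p) (fun t => p * Rpower t (p - 1)) x y) as [c [E Hc]]. lra.
      intros c Hc. apply derivable_pt_lim_power. lra.
      rewrite <- Rabs_Ropp, Ropp_minus_distr, E.
      assert (Rpower c (p - 1) <= Rpower M (p - 1)) by (apply Rle_Rpower_l; lra).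
      assert (0 < Rpower c (p - 1)) by apply exp_pos.
      rewrite Rabs_mult. rewrite (Rabs_pos_eq (p * _)) by nra.
      rewrite (Rabs_minus_sym x y). apply Rmult_le_compat_r. apply Rabs_pos. nra. }
  intros Hx Hy. destruct (Rle_dec x y). auto.
  rewrite Rabs_minus_sym, (Rabs_minus_sym x). apply key; auto; lra.
Qed.

Lemma UC_rpow_trig M c p : 1 <= p -> UC (fun x1 x2 => rpow (Cmod (trig_eval M c x1 x2)) p).
Proof.
  intros Hp e He. set (M0 := Rsum (box M) (fun k => Cmod (c k)) + 1).
  assert (HM0 : 0 < M0). { unfold M0. pose proof (Rsum_nonneg (box M) (fun k => Cmod (c k)) (fun k _ => Cmod_ge0 _)). lra. }
  set (A := p * Rpower M0 (p - 1)). assert (HA : 0 < A) by (unfold A; pose proof (exp_pos ((p-1) * ln M0)); unfold Rpower; nra).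
  set (L := Lconst M c).
  assert (HL : 0 <= L). { unfold L, Lconst. apply Rsum_nonneg. intros k _.
    pose proof (Cmod_ge0 (c k)). pose proof (Rabs_pos (IZR (fst k))). pose proof (Rabs_pos (IZR (snd k))). nra. }
  exists (e / (2 * A * (L + 1))). split. apply Rdiv_lt_0_compat; nra.
  intros x1 x2 y1 y2 H1 H2.
  assert (Bf : forall a b, 0 <= Cmod (trig_eval M c a b) <= M0).
  { intros; split. apply Cmod_ge0. pose proof (trig_eval_bound M c a b). unfold M0; lra. }
  eapply Rle_trans. apply (rpow_lip p M0); auto. fold A.
  eapply Rle_trans. apply Rmult_le_compat_l. lra. eapply Rle_trans. apply Cmod_diff. apply trig_lip.
  fold L. apply Rle_trans with (A * (L * (2 * (e / (2 * A * (L + 1)))))).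
  apply Rmult_le_compat_l. lra. apply Rmult_le_compat_l. lra. lra.
  replace (A * (L * (2 * (e / (2 * A * (L + 1)))))) with (e * (L / (L + 1))) by (field; lra).
  assert (L / (L + 1) <= 1). { apply Rmult_le_reg_r with (L + 1). lra. field_simplify; lra. }
  assert (0 <= L / (L+1)) by (apply Rmult_le_pos; [lra| apply Rlt_le, Rinv_0_lt_compat; lra]). nra.
Qed.

Lemma Csum_seq f m : Csum (seq 0 m) f = (sN (fun a => fst (f a)) m, sN (fun a => snd (f a)) m).
Proof. induction m. simpl; auto. rewrite seq_S, Csum_app, IHm. simpl. unfold Cadd, C0; simpl. f_equal; ring. Qed.

Lemma Rsum_seq f m : Rsum (seq 0 m) f = sN f m.
Proof. induction m. simpl; auto. rewrite seq_S.
  assert (forall l1 l2, Rsum (l1 ++ l2) f = Rsum l1 f + Rsum l2 f).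
  { induction l1; simpl; intros. ring. rewrite IHl1; ring. }
  rewrite H, IHm. simpl. ring. Qed.

Lemma telescope F n : sN (fun a => F (S a) - F a) n = F n - F O.
Proof. induction n; simpl. ring. rewrite IHn. ring. Qed.

Lemma sin_2pim m u : sin (2 * PI * IZR m - u) = - sin u.
Proof.
  assert (S0 : sin (PI * IZR m) = 0) by (apply sin_eq_0_1; exists m; ring).
  assert (S1 : sin (2 * PI * IZR m) = 0) by (apply sin_eq_0_1; exists (2 * m)%Z; rewrite mult_IZR; ring).
  assert (C1 : cos (2 * PI * IZR m) = 1).
  { replace (2 * PI * IZR m) with (2 * (PI * IZR m)) by ring. rewrite cos_2a_sin, S0. ring. }
  rewrite sin_minus, S1, C1. ring.
Qed.
Lemma cos_2pim m u : cos (2 * PI * IZR m - u) = cos u.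
Proof.
  assert (S0 : sin (PI * IZR m) = 0) by (apply sin_eq_0_1; exists m; ring).
  assert (S1 : sin (2 * PI * IZR m) = 0) by (apply sin_eq_0_1; exists (2 * m)%Z; rewrite mult_IZR; ring).
  assert (C1 : cos (2 * PI * IZR m) = 1).
  { replace (2 * PI * IZR m) with (2 * (PI * IZR m)) by ring. rewrite cos_2a_sin, S0. ring. }
  rewrite cos_minus, S1, C1. ring.
Qed.

Lemma orth1 n m : (Z.abs m <= Z.of_nat n)%Z ->
  Csum (seq 0 (S n)) (fun a => Cexpi (IZR m * gp n a)) = if Z.eq_dec m 0 then (INR (S n), 0) else C0.
Proof.
  intros Hm. rewrite Csum_seq. unfold Cexpi; cbn [fst snd]. destruct (Z.eq_dec m 0).
  - subst. f_equal.
    + rewrite (sN_ext _ (fun _ => 1)). rewrite sN_const; ring. intros; rewrite Rmult_0_l, cos_0; auto.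
    + rewrite (sN_ext _ (fun _ => 0)). rewrite sN_const; ring. intros; rewrite Rmult_0_l, sin_0; auto.
  - pose proof PI_RGT_0. assert (Hn : 0 < INR (S n)) by (apply lt_0_INR; lia).
    set (th := 2 * PI * IZR m / INR (S n)).
    assert (Eg : forall a, IZR m * gp n a = INR a * th) by (intros; unfold th, gp; field; lra).
    assert (Hs : sin (th / 2) <> 0).
    { intros E. apply sin_eq_0_0 in E. destruct E as [k Ek]. unfold th in Ek.
      assert (IZR m = IZR k * INR (S n)) by (apply Rmult_eq_reg_l with PI; [|lra];
        replace (PI * IZR m) with (2 * PI * IZR m / INR (S n) / 2 * INR (S n)) by (field; lra); rewrite Ek; ring).
      rewrite INR_IZR_INZ, <- mult_IZR in H0. apply eq_IZR in H0. subst m.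
      destruct (Z.eq_dec k 0). subst; simpl in n0; congruence. nia. }
    assert (Hth : INR (S n) * th = 2 * PI * IZR m) by (unfold th; field; lra).
    unfold C0; f_equal.
    + apply Rmult_eq_reg_l with (2 * sin (th / 2)); [|lra].
      rewrite <- sN_scal, Rmult_0_r.
      pose proof (telescope (fun a => sin ((INR a - /2) * th)) (S n)) as T. cbv beta in T.
      rewrite (sN_ext _ (fun a => sin ((INR (S a) - /2) * th) - sin ((INR a - /2) * th))).
      rewrite T. replace ((INR (S n) - /2) * th) with (2 * PI * IZR m - th / 2) by lra.
      rewrite sin_2pim. replace ((INR 0 - /2) * th) with (- (th / 2)) by (change (INR 0) with 0; field). rewrite sin_neg. ring.
      intros a _. rewrite Eg, S_INR.
      replace ((INR a + 1 - /2) * th) with (INR a * th + th / 2) by field.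
      replace ((INR a - /2) * th) with (INR a * th - th / 2) by field.
      rewrite sin_plus, sin_minus. ring.
    + apply Rmult_eq_reg_l with (2 * sin (th / 2)); [|lra].
      rewrite <- sN_scal, Rmult_0_r.
      pose proof (telescope (fun a => - cos ((INR a - /2) * th)) (S n)) as T. cbv beta in T.
      rewrite (sN_ext _ (fun a => - cos ((INR (S a) - /2) * th) - - cos ((INR a - /2) * th))).
      rewrite T. replace ((INR (S n) - /2) * th) with (2 * PI * IZR m - th / 2) by lra.
      rewrite cos_2pim. replace ((INR 0 - /2) * th) with (- (th / 2)) by (change (INR 0) with 0; field). rewrite cos_neg. ring.
      intros a _. rewrite Eg, S_INR.
      replace ((INR a + 1 - /2) * th) with (INR a * th + th / 2) by field.
      replace ((INR a - /2) * th) with (INR a * th - th / 2) by field.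
      rewrite cos_plus, cos_minus. ring.
Qed.

Lemma Cexpi_add a b : Cmul (Cexpi a) (Cexpi b) = Cexpi (a + b).
Proof. unfold Cexpi, Cmul; cbn [fst snd]. rewrite cos_plus, sin_plus. f_equal; ring. Qed.

Definition GS n (F : R -> R -> Cx) : Cx :=
  Csum (seq 0 (S n)) (fun a => Csum (seq 0 (S n)) (fun b => F (gp n a) (gp n b))).

Lemma Csum_prod2 {A B} (l1 : list A) (l2 : list B) z f g :
  Csum l1 (fun a => Csum l2 (fun b => Cmul z (Cmul (f a) (g b)))) = Cmul z (Cmul (Csum l1 f) (Csum l2 g)).
Proof.
  induction l1; simpl. cx. rewrite IHl1.
  replace (Csum l2 (fun b => Cmul z (Cmul (f a) (g b)))) with (Cmul z (Cmul (f a) (Csum l2 g))).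
  cx. rewrite Csum_mul_l, Csum_mul_l. apply Csum_ext; intros; cx.
Qed.

Lemma Csum_single {A} (l : list A) k f : NoDup l -> In k l -> (forall x, In x l -> x <> k -> f x = C0) -> Csum l f = f k.
Proof.
  intros N Hk H. rewrite (Csum_support l (k :: nil)); auto. simpl; apply Cadd_0_r.
  constructor; auto. constructor.
  intros x Hx. simpl. split.
  - intros Hl. left. destruct (classic (k = x)); auto. exfalso; apply Hx; apply H; auto.
  - intros [<-|[]]; auto.
Qed.

Lemma fourier_extract M n c k : (2 * M <= n)%nat -> (kinf k <= Z.of_nat M)%Z ->
  GS n (fun x1 x2 => Cmul (trig_eval M c x1 x2) (Cexpi (- (IZR (fst k) * x1 + IZR (snd k) * x2))))
  = Cscale (INR (S n) ^ 2) (c k).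
Proof.
  intros Hn Hk. unfold GS, trig_eval.
  set (T := fun a b k' => Cmul (c k') (Cmul (Cexpi (IZR (fst k' - fst k) * gp n a)) (Cexpi (IZR (snd k' - snd k) * gp n b)))).
  transitivity (Csum (seq 0 (S n)) (fun a => Csum (seq 0 (S n)) (fun b => Csum (box M) (fun k' => T a b k')))).
  { apply Csum_ext; intros a _. apply Csum_ext; intros b _. rewrite Csum_mul_r. apply Csum_ext; intros k' _.
    unfold T. rewrite !minus_IZR.
    replace (Cmul (Cmul (c k') (Cexpi (IZR (fst k') * gp n a + IZR (snd k') * gp n b)))
          (Cexpi (- (IZR (fst k) * gp n a + IZR (snd k) * gp n b))))
      with (Cmul (c k') (Cmul (Cexpi (IZR (fst k') * gp n a + IZR (snd k') * gp n b))
          (Cexpi (- (IZR (fst k) * gp n a + IZR (snd k) * gp n b))))) by cx.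
    rewrite !Cexpi_add. f_equal. f_equal. ring. }
  rewrite (Csum_ext _ _ (fun a => Csum (box M) (fun k' => Csum (seq 0 (S n)) (fun b => T a b k')))).
  2:{ intros; apply Csum_swap. }
  rewrite Csum_swap. unfold T. rewrite (Csum_ext _ _ (fun k' => Cmul (c k') (Cmul
     (Csum (seq 0 (S n)) (fun a => Cexpi (IZR (fst k' - fst k) * gp n a)))
     (Csum (seq 0 (S n)) (fun b => Cexpi (IZR (snd k' - snd k) * gp n b)))))).
  2:{ intros; apply Csum_prod2. }
  rewrite (Csum_single _ k). 
  - rewrite !orth1. rewrite !Z.sub_diag. destruct (Z.eq_dec 0 0); [|congruence]. cx.
    rewrite Z.sub_diag; simpl; lia. rewrite Z.sub_diag; simpl; lia.
  - apply NoDup_box.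
  - apply In_box; auto.
  - intros k' Hb Hk'. apply In_box in Hb.
    + pose proof (kinf_abs1 k); pose proof (kinf_abs2 k); pose proof (kinf_abs1 k'); pose proof (kinf_abs2 k').
      rewrite !orth1 by lia.
      destruct (Z.eq_dec (fst k' - fst k) 0); destruct (Z.eq_dec (snd k' - snd k) 0).
      * exfalso; apply Hk'. destruct k, k'; simpl in *; f_equal; lia.
      * cx. * cx. * cx.
Qed.

Lemma PI_gt3 : 3 < PI. Proof. pose proof PI2_3_2. lra. Qed.
Lemma fourpi2_gt1 : 1 < 4 * PI ^ 2. Proof. pose proof PI_gt3. nra. Qed.

Lemma riemann_le g n c : (forall x1 x2, g x1 x2 <= c) -> riemann_T2 g n <= 4 * PI ^ 2 * c.
Proof.
  intros H. rewrite riemann_sN. assert (Hn : 0 < INR (S n)) by (apply lt_0_INR; lia).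
  apply Rle_trans with ((2 * PI / INR (S n)) ^ 2 * sN (fun a => sN (fun b => c) (S n)) (S n)).
  apply Rmult_le_compat_l. apply pow2_ge_0. apply sN_le; intros; apply sN_le; intros; auto.
  rewrite !sN_const. right. field. lra.
Qed.

Lemma Rpower_inv_p x p : 0 < x -> 1 <= p -> Rpower (Rpower x p) (1 / p) = x.
Proof. intros. rewrite Rpower_mult. replace (p * (1 / p)) with 1 by (field; lra). apply Rpower_1; auto. Qed.

Lemma Rpower_pos x y : 0 < Rpower x y. Proof. apply exp_pos. Qed.

Lemma pow_pi_p p : 1 <= p -> 1 <= Rpower (4 * PI ^ 2) (1 / p) <= 4 * PI ^ 2.
Proof.
  intros Hp. pose proof fourpi2_gt1.
  assert (0 < 1 / p <= 1).
  { split. apply Rdiv_lt_0_compat; lra. unfold Rdiv; rewrite Rmult_1_l; rewrite <- Rinv_1; apply Rinv_le_contravar; lra. }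
  split.
  - rewrite <- (Rpower_O (4 * PI ^ 2)) at 1 by lra. apply Rle_Rpower; lra.
  - rewrite <- (Rpower_1 (4 * PI ^ 2)) at 2 by lra. apply Rle_Rpower; lra.
Qed.

Lemma Lp_upper M c p S : 1 <= p -> 0 <= S -> (forall x1 x2, Cmod (trig_eval M c x1 x2) <= S) ->
  Lp_norm p (trig_eval M c) <= 4 * PI ^ 2 * S.
Proof.
  intros Hp HS H. unfold Lp_norm.
  set (g := fun x1 x2 => rpow (Cmod (trig_eval M c x1 x2)) p).
  assert (Hcv : Un_cv (riemann_T2 g) (int_T2 g)) by (apply riemann_cv, UC_rpow_trig; auto).
  assert (HI : int_T2 g <= 4 * PI ^ 2 * rpow S p).
  { apply (cv_le _ _ _ O Hcv). intros n _. apply riemann_le. intros; unfold g.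
    apply rpow_mono. lra. split; auto. apply Cmod_ge0. }
  pose proof fourpi2_gt1.
  destruct (Rle_dec (int_T2 g) 0). rewrite rpow_nonpos by auto. nra.
  rewrite rpow_pos by lra.
  destruct (Req_dec S 0). subst. rewrite rpow_nonpos in HI by lra. lra.
  rewrite rpow_pos in HI by lra.
  apply Rle_trans with (Rpower (4 * PI ^ 2 * Rpower S p) (1 / p)).
  apply Rle_Rpower_l. apply Rlt_le, Rdiv_lt_0_compat; lra. lra.
  rewrite <- Rpower_mult_distr, Rpower_inv_p; try lra. 2: apply Rpower_pos.
  pose proof (pow_pi_p p Hp). nra.
Qed.

Lemma bernoulli x p : 1 <= p -> 0 <= x -> 1 + p * (x - 1) <= rpow x p.
Proof.
  intros Hp Hx. destruct (Req_dec x 0). subst. rewrite rpow_nonpos by lra. lra.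
  rewrite rpow_pos by lra.
  assert (R1 : Rpower 1 p = 1) by (unfold Rpower; rewrite ln_1, Rmult_0_r, exp_0; auto).
  destruct (Rtotal_order x 1) as [Hlt|[Heq|Hgt]].
  - destruct (MVT_cor2 (fun t => Rpower t p) (fun t => p * Rpower t (p - 1)) x 1) as [c [E Hc]]. lra.
    intros c Hc. apply derivable_pt_lim_power. lra.
    rewrite R1 in E.
    assert (Rpower c (p - 1) <= Rpower 1 (p - 1)) by (apply Rle_Rpower_l; lra).
    assert (Rpower 1 (p - 1) = 1) by (unfold Rpower; rewrite ln_1, Rmult_0_r, exp_0; auto).
    pose proof (Rpower_pos c (p - 1)).
    assert (0 <= p * (1 - x) * (1 - Rpower c (p - 1))) by (apply Rmult_le_pos; [apply Rmult_le_pos|]; lra). nra.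
  - subst. rewrite R1. lra.
  - destruct (MVT_cor2 (fun t => Rpower t p) (fun t => p * Rpower t (p - 1)) 1 x) as [c [E Hc]]. lra.
    intros c Hc. apply derivable_pt_lim_power. lra.
    rewrite R1 in E.
    assert (Rpower 1 (p - 1) <= Rpower c (p - 1)) by (apply Rle_Rpower_l; lra).
    assert (Rpower 1 (p - 1) = 1) by (unfold Rpower; rewrite ln_1, Rmult_0_r, exp_0; auto).
    assert (0 <= p * (x - 1) * (Rpower c (p - 1) - 1)) by (apply Rmult_le_pos; [apply Rmult_le_pos|]; lra). nra.
Qed.

Lemma rpow_scale c y p : 0 < c -> 0 <= y -> rpow y p = Rpower c p * rpow (y / c) p.
Proof.
  intros Hc Hy. destruct (Req_dec y 0). subst. rewrite (rpow_nonpos 0) by lra. rewrite (rpow_nonpos (0 / c)) by (unfold Rdiv; rewrite Rmult_0_l; lra). ring.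
  assert (0 < y / c) by (apply Rdiv_lt_0_compat; lra).
  rewrite !rpow_pos by lra. rewrite Rpower_mult_distr by lra. f_equal. field. lra.
Qed.

Lemma jensen {A} (l : list A) y p : 1 <= p -> (0 < length l)%nat -> (forall x, 0 <= y x) ->
  INR (length l) * rpow (Rsum l y / INR (length l)) p <= Rsum l (fun x => rpow (y x) p).
Proof.
  intros Hp Hl Hy. set (m := INR (length l)). assert (Hm : 0 < m) by (apply lt_0_INR; auto).
  set (c := Rsum l y / m).
  destruct (Rle_dec c 0). rewrite rpow_nonpos by auto. rewrite Rmult_0_r.
  apply Rsum_nonneg; intros; apply rpow_ge0.
  rewrite rpow_pos by lra.
  apply Rle_trans with (Rsum l (fun x => Rpower c p * (1 + p * (y x / c - 1)))).
  - rewrite Rsum_scal.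
    rewrite (Rsum_ext _ _ (fun x => (1 - p) + (p / c) * y x)) by (intros; field; lra).
    rewrite Rsum_add, Rsum_scal, Rsum_const. fold m.
    replace (Rsum l y) with (c * m) by (unfold c; field; lra).
    right. field. lra.
  - apply Rsum_le. intros x _. rewrite (rpow_scale c (y x) p) by (auto; lra).
    apply Rmult_le_compat_l. apply Rlt_le, Rpower_pos. apply bernoulli; auto.
    apply Rmult_le_pos; auto. apply Rlt_le, Rinv_0_lt_compat; lra.
Qed.

Lemma Rsum_prod {A B} (l1 : list A) (l2 : list B) F :
  Rsum (list_prod l1 l2) (fun ab => F (fst ab) (snd ab)) = Rsum l1 (fun a => Rsum l2 (fun b => F a b)).
Proof.
  assert (Happ : forall (l l' : list (A * B)) f, Rsum (l ++ l') f = Rsum l f + Rsum l' f).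
  { induction l; simpl; intros. ring. rewrite IHl; ring. }
  induction l1; simpl. auto. rewrite Happ, IHl1. f_equal.
  clear IHl1. induction l2; simpl; auto. rewrite IHl2. auto.
Qed.

Lemma length_grid n : INR (length (list_prod (seq 0 (S n)) (seq 0 (S n)))) = INR (S n) ^ 2.
Proof. rewrite length_prod, length_seq, mult_INR. ring. Qed.

Lemma Lp_lower M c p k : 1 <= p -> (kinf k <= Z.of_nat M)%Z -> Cmod (c k) <= Lp_norm p (trig_eval M c).
Proof.
  intros Hp Hk. unfold Lp_norm.
  set (g := fun x1 x2 => rpow (Cmod (trig_eval M c x1 x2)) p).
  assert (Hcv : Un_cv (riemann_T2 g) (int_T2 g)) by (apply riemann_cv, UC_rpow_trig; auto).
  set (ck := Cmod (c k)). assert (Hck : 0 <= ck) by apply Cmod_ge0.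
  assert (Hgrid : forall n, (n >= 2 * M)%nat -> 4 * PI ^ 2 * rpow ck p <= riemann_T2 g n).
  { intros n Hn. assert (HSn : 0 < INR (S n)) by (apply lt_0_INR; lia).
    set (Y := fun a b => Cmod (trig_eval M c (gp n a) (gp n b))).
    set (L := list_prod (seq 0 (S n)) (seq 0 (S n))).
    assert (HS : INR (S n) ^ 2 * ck <= Rsum L (fun ab => Y (fst ab) (snd ab))).
    { unfold L. rewrite Rsum_prod.
      pose proof (fourier_extract M n c k ltac:(lia) Hk) as FE.
      apply (f_equal Cmod) in FE. rewrite Cmod_scale, Rabs_pos_eq in FE by (apply pow2_ge_0).
      fold ck in FE. rewrite <- FE. unfold GS. eapply Rle_trans. apply Cmod_Csum.
      apply Rsum_le. intros a _. eapply Rle_trans. apply Cmod_Csum.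
      right. apply Rsum_ext. intros b _. unfold Y. rewrite Cmod_mul, Cmod_expi. ring. }
    assert (HJ := jensen L (fun ab => Y (fst ab) (snd ab)) p Hp).
    unfold L at 1 in HJ. rewrite length_prod, length_seq in HJ. specialize (HJ ltac:(simpl; lia)).
    specialize (HJ (fun ab => Cmod_ge0 _)). fold L in HJ.
    assert (EL : INR (length L) = INR (S n) ^ 2) by (unfold L; apply length_grid).
    rewrite EL in HJ.
    assert (Havg : ck <= Rsum L (fun ab => Y (fst ab) (snd ab)) / INR (S n) ^ 2).
    { apply Rmult_le_reg_r with (INR (S n) ^ 2). nra. unfold Rdiv.
      rewrite Rmult_assoc, Rinv_l, Rmult_1_r by nra. lra. }
    assert (rpow ck p <= rpow (Rsum L (fun ab => Y (fst ab) (snd ab)) / INR (S n) ^ 2) p)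
      by (apply rpow_mono; lra).
    rewrite riemann_sN.
    assert (ER : Rsum L (fun ab => rpow (Y (fst ab) (snd ab)) p) =
                 sN (fun a => sN (fun b => g (gp n a) (gp n b)) (S n)) (S n)).
    { unfold L. rewrite (Rsum_prod _ _ (fun a b => rpow (Y a b) p)), Rsum_seq.
      apply sN_ext. intros. rewrite Rsum_seq. auto. }
    rewrite <- ER.
    replace (4 * PI ^ 2 * rpow ck p) with ((2 * PI / INR (S n)) ^ 2 * (INR (S n) ^ 2 * rpow ck p)) by (field; lra).
    apply Rmult_le_compat_l. apply pow2_ge_0. eapply Rle_trans; [|apply HJ].
    apply Rmult_le_compat_l. nra. auto. }
  assert (HI : 4 * PI ^ 2 * rpow ck p <= int_T2 g) by (apply (cv_ge _ _ _ (2 * M) Hcv); auto).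
  pose proof fourpi2_gt1.
  destruct (Req_dec ck 0). rewrite H0. apply rpow_ge0.
  rewrite rpow_pos in HI by lra. pose proof (Rpower_pos ck p).
  rewrite rpow_pos by nra.
  apply Rle_trans with (Rpower (4 * PI ^ 2 * Rpower ck p) (1 / p)).
  - rewrite <- Rpower_mult_distr, Rpower_inv_p; try lra. pose proof (pow_pi_p p Hp). nra.
  - apply Rle_Rpower_l. apply Rlt_le, Rdiv_lt_0_compat; lra. split; nra.
Qed.

Definition esq (z : Cx) : R := fst z * fst z + snd z * snd z.
Definition dotc (z w : Cx) : R := fst z * fst w + snd z * snd w.

Lemma esq_Cmod z : esq z = Cmod z ^ 2. Proof. rewrite Cmod_sq. unfold esq; ring. Qed.

Lemma pt_ident (u1 u2 A1 A2 p : Cx) (k1 k2 r : R) :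
  Cadd (Cscale k1 u1) (Cscale k2 u2) = C0 ->
  dotc u1 (Csub (Copp A1) (Cadd (Cmul Ci (Cscale k1 p)) (Cscale r u1))) +
  dotc u2 (Csub (Copp A2) (Cadd (Cmul Ci (Cscale k2 p)) (Cscale r u2)))
  = - fst (Cadd (Cmul (Cconj u1) A1) (Cmul (Cconj u2) A2)) - r * (esq u1 + esq u2).
Proof.
  intros E. assert (E1 := f_equal fst E); assert (E2 := f_equal snd E).
  destruct u1 as [a b], u2 as [c d], p as [x y], A1 as [a1 b1], A2 as [a2 b2].
  unfold dotc, esq, Csub, Cadd, Copp, Cmul, Ci, Cscale, Cconj, C0 in *; cbn [fst snd] in *.
  apply Rminus_diag_uniq.
  first [ transitivity (y * (k1 * a + k2 * c) - x * (k1 * b + k2 * d)); [ring|rewrite E1, E2; ring]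
        | transitivity (- y * (k1 * a + k2 * c) + x * (k1 * b + k2 * d)); [ring|rewrite E1, E2; ring] ].
Qed.

Section Energy.
Variables (N : nat) (v : VField).
Hypothesis Hsupp : forall l, (kinf l > Z.of_nat N)%Z \/ l = k0 -> v l = (C0, C0).
Hypothesis Hdiv : divfree v.
Hypothesis Hreal : forall k, v (kneg k) = (Cconj (fst (v k)), Cconj (snd (v k))).

Lemma conj_neg k : Cconj (fst (v k)) = fst (v (kneg k)) /\ Cconj (snd (v k)) = snd (v (kneg k)).
Proof.
  pose proof (Hreal (kneg k)) as H. replace (kneg (kneg k)) with k in H by (destruct k; unfold kneg; simpl; f_equal; lia).
  rewrite H. simpl. unfold Cconj. destruct (v (kneg k)) as [[a b] [c d]]. simpl. split; f_equal; ring.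
Qed.

Definition Fj (j k : Z2) : Cx :=
  Cmul (adv v j (ksub k j)) (Cadd (Cmul (fst (v (ksub k j))) (fst (v (kneg k))))
                                   (Cmul (snd (v (ksub k j))) (snd (v (kneg k))))).

Definition Tsum : Cx := Csum (box N) (fun k =>
  Cadd (Cmul (Cconj (fst (v k))) (fst (NLu N v k))) (Cmul (Cconj (snd (v k))) (snd (NLu N v k)))).

Lemma Fj_anti j k : Fj j (ksub j k) = Copp (Fj j k).
Proof.
  unfold Fj.
  replace (ksub (ksub j k) j) with (kneg k) by (destruct j, k; unfold ksub, kneg; simpl; f_equal; lia).
  replace (kneg (ksub j k)) with (ksub k j) by (destruct j, k; unfold ksub, kneg; simpl; f_equal; lia).
  assert (A : adv v j (kneg k) = Copp (adv v j (ksub k j))).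
  { pose proof (Hdiv j) as D. unfold adv. destruct j as [j1 j2], k as [k1 k2]; unfold kneg, ksub; cbn [fst snd] in *.
    rewrite !minus_IZR, !opp_IZR. revert D. destruct (v (j1, j2)) as [[a b] [c d]]; cbn [fst snd].
    unfold Cadd, Cscale, Cmul, Copp, Ci, C0; cbn [fst snd]. intros D.
    assert (E1 := f_equal fst D); assert (E2 := f_equal snd D); cbn [fst snd] in E1, E2.
    f_equal.
    - apply Rminus_diag_uniq. transitivity (IZR j1 * b + IZR j2 * d); [ring|]. rewrite E2. ring.
    - apply Rminus_diag_uniq. transitivity (-(IZR j1 * a + IZR j2 * c)); [ring|]. rewrite E1. ring. }
  rewrite A. cx.
Qed.

Lemma v_nonzero_box l : v l <> (C0, C0) -> (kinf l <= Z.of_nat N)%Z.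
Proof. intros H. destruct (Z_le_gt_dec (kinf l) (Z.of_nat N)); auto. exfalso; apply H, Hsupp; auto. Qed.

Lemma Cmul_nz_l z w : Cmul z w <> C0 -> z <> C0.
Proof. intros H E; apply H; subst; apply Cmul_0_l. Qed.
Lemma Cmul_nz_r z w : Cmul z w <> C0 -> w <> C0.
Proof. intros H E; apply H; subst; apply Cmul_0_r. Qed.

Lemma Fj_nz j k : Fj j k <> C0 -> v (kneg k) <> (C0, C0) /\ v (ksub k j) <> (C0, C0).
Proof.
  unfold Fj. intros H. apply Cmul_nz_r in H.
  split; intros E; apply H; rewrite E; simpl; cx.
Qed.

Lemma kinf_neg k : kinf (kneg k) = kinf k.
Proof. destruct k; unfold kinf, kneg; simpl. lia. Qed.

Lemma Tsum_zero : Tsum = C0.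
Proof.
  assert (E1 : Tsum = Csum (box N) (fun j => Csum (box N) (fun k => Fj j k))).
  { unfold Tsum. rewrite <- Csum_swap. apply Csum_ext. intros k _.
    destruct (conj_neg k) as [c1 c2]. rewrite c1, c2. unfold NLu; cbn [fst snd].
    rewrite !Csum_mul_l, <- Csum_add. apply Csum_ext. intros j _. unfold Fj. cx. }
  assert (E2 : Tsum = Csum (box N) (fun j => Csum (box (2 * N)) (fun k => Fj j k))).
  { rewrite E1. apply Csum_ext. intros j _. apply Csum_support; try apply NoDup_box.
    intros k Hk. destruct (Fj_nz j k Hk) as [H1 _]. apply v_nonzero_box in H1. rewrite kinf_neg in H1.
    rewrite !In_box. lia. }
  assert (E3 : Tsum = Copp Tsum).
  { rewrite E2 at 1. rewrite E2. rewrite <- Csum_opp. apply Csum_ext. intros j Hj. rewrite <- Csum_opp.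
    apply In_box in Hj.
    rewrite <- (Csum_invol _ (ksub j) (fun k => Fj j k)).
    - apply Csum_ext. intros k _. apply Fj_anti.
    - apply NoDup_box.
    - intros k. destruct j, k; unfold ksub; simpl; f_equal; lia.
    - intros k Hk. destruct (Fj_nz j k Hk) as [H1 _]. apply v_nonzero_box in H1. rewrite kinf_neg in H1.
      rewrite In_box. lia.
    - intros k Hk. destruct (Fj_nz j _ Hk) as [H1 _]. apply v_nonzero_box in H1.
      rewrite In_box. destruct j, k; unfold kinf, kneg, ksub in *; simpl in *. lia. }
  destruct Tsum as [a b]. unfold Copp in E3. inversion E3. unfold C0. f_equal; lra.
Qed.

End Energy.

Lemma esq_deriv z t d : Cderiv z t d -> derivable_pt_lim (fun s => esq (z s)) t (2 * dotc (z t) d).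
Proof.
  intros [H1 H2]. unfold esq, dotc.
  pose proof (derivable_pt_lim_plus _ _ _ _ _ (derivable_pt_lim_mult _ _ _ _ _ H1 H1) (derivable_pt_lim_mult _ _ _ _ _ H2 H2)) as H.
  replace (2 * (fst (z t) * fst d + snd (z t) * snd d)) with
    (fst d * fst (z t) + fst (z t) * fst d + (snd d * snd (z t) + snd (z t) * snd d)) by ring.
  exact H.
Qed.

Lemma Rsum_deriv {A} (l : list A) (f : A -> R -> R) (f' : A -> R) t :
  (forall x, In x l -> derivable_pt_lim (f x) t (f' x)) ->
  derivable_pt_lim (fun s => Rsum l (fun x => f x s)) t (Rsum l f').
Proof.
  induction l; simpl; intros H.
  - apply (derivable_pt_lim_const 0).
  - apply (derivable_pt_lim_plus (f a) (fun s => Rsum l (fun x => f x s))); auto.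
Qed.

Lemma fst_Csum {A} (l : list A) f : fst (Csum l f) = Rsum l (fun x => fst (f x)).
Proof. induction l; simpl; auto. rewrite <- IHl. auto. Qed.

Lemma abs_lt_split x a : Rabs x < a -> -a < x < a.
Proof. unfold Rabs; destruct Rcase_abs; lra. Qed.

Definition RC0 (f : R -> R) := forall e, e > 0 -> exists d, d > 0 /\ forall s, 0 <= s < d -> Rabs (f s - f 0) < e.

Lemma RC0_plus f g : RC0 f -> RC0 g -> RC0 (fun s => f s + g s).
Proof.
  intros Hf Hg e He. destruct (Hf (e/2)) as [d1 [Hd1 H1]]. lra. destruct (Hg (e/2)) as [d2 [Hd2 H2]]. lra.
  exists (Rmin d1 d2). split. apply Rmin_pos; auto. intros s Hs.
  pose proof (Rmin_l d1 d2); pose proof (Rmin_r d1 d2).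
  specialize (H1 s ltac:(lra)); specialize (H2 s ltac:(lra)).
  replace (f s + g s - (f 0 + g 0)) with ((f s - f 0) + (g s - g 0)) by ring.
  eapply Rle_lt_trans. apply Rabs_triang. lra.
Qed.

Lemma RC0_Rsum {A} (l : list A) (f : A -> R -> R) : (forall x, In x l -> RC0 (f x)) -> RC0 (fun s => Rsum l (fun x => f x s)).
Proof.
  induction l; simpl; intros H.
  - intros e He. exists 1. split. lra. intros. rewrite Rminus_diag, Rabs_R0. lra.
  - apply (RC0_plus (f a) (fun s => Rsum l (fun x => f x s))); auto.
Qed.

Lemma RC0_esq z : Cright_cont0 z -> RC0 (fun s => esq (z s)).
Proof.
  intros Hz e He. set (A := Cmod (z 0)). assert (HA : 0 <= A) by apply Cmod_ge0.
  destruct (Hz (Rmin 1 (e / (4 * A + 2)))) as [d [Hd H]].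
  apply Rmin_pos. lra. apply Rdiv_lt_0_compat; lra.
  exists d. split; auto. intros s Hs. specialize (H s Hs).
  set (dl := Rmin 1 (e / (4 * A + 2))) in *.
  assert (Hdl1 : dl <= 1) by apply Rmin_l. assert (Hdl2 : dl <= e / (4 * A + 2)) by apply Rmin_r.
  assert (Hdl3 : dl * (4 * A + 2) <= e).
  { apply Rmult_le_reg_r with (/ (4 * A + 2)). apply Rinv_0_lt_compat; lra.
    rewrite Rmult_assoc, Rinv_r, Rmult_1_r by lra. exact Hdl2. }
  set (w := Csub (z s) (z 0)) in *.
  assert (Ew : z s = Cadd (z 0) w) by (unfold w; destruct (z s) as [p q], (z 0) as [p0 q0]; unfold Cadd, Csub, Copp; simpl; f_equal; ring).
  pose proof (Cmod_fst w); pose proof (Cmod_snd w); pose proof (Cmod_fst (z 0)); pose proof (Cmod_snd (z 0)).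
  fold A in H2, H3.
  rewrite Ew. unfold esq. destruct (z 0) as [a b]; destruct w as [x y]. unfold Cadd; cbn [fst snd] in *.
  replace ((a + x) * (a + x) + (b + y) * (b + y) - (a * a + b * b)) with (2 * (a * x) + 2 * (b * y) + (x * x + y * y)) by ring.
  assert (Rabs x < dl) by lra. assert (Rabs y < dl) by lra.
  assert (Rabs (a * x) <= A * dl) by (rewrite Rabs_mult; apply Rmult_le_compat; try apply Rabs_pos; lra).
  assert (Rabs (b * y) <= A * dl) by (rewrite Rabs_mult; apply Rmult_le_compat; try apply Rabs_pos; lra).
  assert (Rabs (x * x + y * y) < 2 * dl).
  { rewrite Rabs_pos_eq by nra. rewrite <- (Rabs_pos_eq (x*x)) by nra. rewrite <- (Rabs_pos_eq (y*y)) by nra.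
    rewrite !Rabs_mult. pose proof (Rabs_pos x); pose proof (Rabs_pos y). nra. }
  eapply Rle_lt_trans. apply Rabs_triang. eapply Rle_lt_trans. apply Rplus_le_compat_r. apply Rabs_triang.
  rewrite !Rabs_mult, !(Rabs_pos_eq 2) by lra. rewrite <- !Rabs_mult. nra.
Qed.

Section EnergyT.
Variables (N : nat) (u : R -> VField) (ph : R -> Z2 -> Cx) (r : Z2 -> R).
Hypothesis Hs : forall t k, 0 <= t -> ((kinf k > Z.of_nat N)%Z \/ k = k0) -> u t k = (C0, C0).
Hypothesis Hd : forall t k, 0 <= t ->
     Cadd (Cscale (IZR (fst k)) (fst (u t k))) (Cscale (IZR (snd k)) (snd (u t k))) = C0.
Hypothesis Hr : forall t k, 0 <= t -> u t (kneg k) = (Cconj (fst (u t k)), Cconj (snd (u t k))).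
Hypothesis Hc : forall k, Cright_cont0 (fun s => fst (u s k)) /\ Cright_cont0 (fun s => snd (u s k)).
Hypothesis Ho : forall t k, 0 < t -> (kinf k <= Z.of_nat N)%Z ->
     Cderiv (fun s => fst (u s k)) t
       (Csub (Copp (fst (NLu N (u t) k)))
         (Cadd (Cmul Ci (Cscale (IZR (fst k)) (ph t k))) (Cscale (r k) (fst (u t k))))) /\
     Cderiv (fun s => snd (u s k)) t
       (Csub (Copp (snd (NLu N (u t) k)))
         (Cadd (Cmul Ci (Cscale (IZR (snd k)) (ph t k))) (Cscale (r k) (snd (u t k))))).
Hypothesis Hr0 : forall k, 0 <= r k.

Definition En t := Rsum (box N) (fun k => esq (fst (u t k)) + esq (snd (u t k))).
Definition Dn t := Rsum (box N) (fun k =>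
  2 * dotc (fst (u t k)) (Csub (Copp (fst (NLu N (u t) k)))
         (Cadd (Cmul Ci (Cscale (IZR (fst k)) (ph t k))) (Cscale (r k) (fst (u t k))))) +
  2 * dotc (snd (u t k)) (Csub (Copp (snd (NLu N (u t) k)))
         (Cadd (Cmul Ci (Cscale (IZR (snd k)) (ph t k))) (Cscale (r k) (snd (u t k)))))).

Lemma En_deriv t : 0 < t -> derivable_pt_lim En t (Dn t).
Proof.
  intros Ht. unfold En, Dn.
  apply (Rsum_deriv (box N) (fun k s => esq (fst (u s k)) + esq (snd (u s k)))).
  intros k Hk. apply In_box in Hk. destruct (Ho t k Ht Hk) as [D1 D2].
  apply (derivable_pt_lim_plus (fun s => esq (fst (u s k))) (fun s => esq (snd (u s k)))).
  apply (esq_deriv (fun s => fst (u s k))); auto.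
  apply (esq_deriv (fun s => snd (u s k))); auto.
Qed.

Lemma Dn_le0 t : 0 < t -> Dn t <= 0.
Proof.
  intros Ht. unfold Dn.
  rewrite (Rsum_ext _ _ (fun k => 2 * (- fst (Cadd (Cmul (Cconj (fst (u t k))) (fst (NLu N (u t) k)))
       (Cmul (Cconj (snd (u t k))) (snd (NLu N (u t) k))))) + 2 * (- (r k * (esq (fst (u t k)) + esq (snd (u t k))))))).
  2:{ intros k _. rewrite <- Rmult_plus_distr_l, pt_ident. ring. apply Hd; lra. }
  rewrite Rsum_add, !Rsum_scal.
  assert (T0 := Tsum_zero N (u t) (fun k H => Hs t k ltac:(lra) H) (fun k => Hd t k ltac:(lra)) (fun k => Hr t k ltac:(lra))).
  unfold Tsum in T0. apply (f_equal fst) in T0. rewrite fst_Csum in T0. change (fst C0) with 0 in T0.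
  rewrite (Rsum_ext _ _ (fun k => -1 * fst (Cadd (Cmul (Cconj (fst (u t k))) (fst (NLu N (u t) k)))
       (Cmul (Cconj (snd (u t k))) (snd (NLu N (u t) k)))))) by (intros; ring).
  rewrite Rsum_scal, T0.
  assert (0 <= Rsum (box N) (fun k => r k * (esq (fst (u t k)) + esq (snd (u t k))))).
  { apply Rsum_nonneg. intros k _. apply Rmult_le_pos; auto. unfold esq. nra. }
  rewrite (Rsum_ext _ _ (fun k => -1 * (r k * (esq (fst (u t k)) + esq (snd (u t k)))))) by (intros; ring).
  rewrite Rsum_scal. lra.
Qed.

Lemma En_mono s t : 0 < s -> s <= t -> En t <= En s.
Proof.
  intros Hs0 Hst. destruct (Req_dec s t). subst; lra.
  destruct (MVT_cor2 En Dn s t) as [c [E Hcc]]. lra.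
  intros c Hcc. apply En_deriv. lra.
  pose proof (Dn_le0 c ltac:(lra)). nra.
Qed.

Lemma En_rc0 : RC0 En.
Proof.
  unfold En. apply (RC0_Rsum (box N) (fun k s => esq (fst (u s k)) + esq (snd (u s k)))).
  intros k _. destruct (Hc k) as [C1 C2].
  apply (RC0_plus (fun s => esq (fst (u s k))) (fun s => esq (snd (u s k)))).
  apply (RC0_esq (fun s => fst (u s k))); auto. apply (RC0_esq (fun s => snd (u s k))); auto.
Qed.

Lemma En_le t : 0 <= t -> En t <= En 0.
Proof.
  intros Ht. destruct (Req_dec t 0). subst; lra.
  destruct (Rle_dec (En t) (En 0)); auto. exfalso.
  destruct (En_rc0 (En t - En 0)) as [d [Hd0 Hdd]]. lra.
  set (s := Rmin (d / 2) t). assert (0 < s) by (apply Rmin_pos; lra).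
  assert (s <= t) by apply Rmin_r. assert (s <= d / 2) by apply Rmin_l.
  specialize (Hdd s ltac:(lra)). pose proof (En_mono s t ltac:(lra) ltac:(lra)).
  apply abs_lt_split in Hdd. lra.
Qed.
End EnergyT.

Lemma arith n W Cs : 2 <= n -> 0 <= W -> 0 <= Cs ->
  (4 * n + 1) ^ 2 * ((2 * n + 1) ^ 2 * (2 * n * (W * (Cs * / n ^ 7)))) <= 450 * (W * Cs) * / n ^ 2.
Proof.
  intros Hn HW HC.
  assert (A : (4 * n + 1) ^ 2 * ((2 * n + 1) ^ 2 * (2 * n)) <= 450 * n ^ 5).
  { assert (0 <= (4*n+1)^2 <= 25 * n^2) by (split; nra).
    assert (0 <= (2*n+1)^2 <= 9 * n^2) by (split; nra).
    replace (450 * n ^ 5) with ((25 * n^2) * ((9 * n^2) * (2 * n))) by ring.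
    apply Rmult_le_compat; try nra. }
  assert (Hn7 : 0 < n ^ 7) by (apply pow_lt; lra).
  replace ((4 * n + 1) ^ 2 * ((2 * n + 1) ^ 2 * (2 * n * (W * (Cs * / n ^ 7)))))
    with (((4 * n + 1) ^ 2 * ((2 * n + 1) ^ 2 * (2 * n))) * (W * Cs) * / n ^ 7) by ring.
  apply Rle_trans with (450 * n ^ 5 * (W * Cs) * / n ^ 7).
  apply Rmult_le_compat_r. apply Rlt_le, Rinv_0_lt_compat; auto. apply Rmult_le_compat_r; nra.
  right. field. lra.
Qed.

Lemma inv_sq_le n : 1 <= n -> / n ^ 2 <= / n.
Proof. intros. apply Rinv_le_contravar. lra. nra. Qed.
Theorem mainTheorem7
  (* initial data u_0 in L^2, given by its Fourier coefficients *)
  (u0 : VField)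
  (Hu0_real : forall k, u0 (kneg k) = (Cconj (fst (u0 k)), Cconj (snd (u0 k))))
  (Hu0_L2 : exists B, forall M, Rsum (box M) (fun k =>
              Cmod (fst (u0 k)) ^ 2 + Cmod (snd (u0 k)) ^ 2) <= B)
  (Hu0_div : forall k, Cadd (Cscale (IZR (fst k)) (fst (u0 k)))
                            (Cscale (IZR (snd k)) (snd (u0 k))) = C0)
  (Hu0_mean : u0 k0 = (C0, C0))
  (* SV parameters, indexed by N >= 2 *)
  (eps : nat -> R) (m a : nat -> nat)
  (Rhat : nat -> Z2 -> R) (Khat : nat -> Z2 -> Cx) (CRK : R)
  (Heps : forall N, (2 <= N)%nat -> eps N > 0)
  (Ha : forall N, (2 <= N)%nat -> (1 <= a N <= N)%nat)
  (HR01 : forall N k, (2 <= N)%nat -> 0 <= Rhat N k <= 1)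
  (HR1 : forall N k, (2 <= N)%nat -> knorm k <= INR (m N) -> Rhat N k = 1)
  (HR0 : forall N k, (2 <= N)%nat -> knorm k > 2 * INR (m N) -> Rhat N k = 0)
  (HRL1 : forall N, (2 <= N)%nat ->
     Lp_norm 1 (trig_eval (2 * m N) (fun k => (Rhat N k / (4 * PI ^ 2), 0)))
       <= CRK * ln (INR N) ^ 2)
  (HK0 : forall N k, (2 <= N)%nat -> (kinf k > Z.of_nat (a N))%Z -> Khat N k = C0)
  (HK1 : forall N k, (2 <= N)%nat -> Cmod (Khat N k) <= 1)
  (HKreal : forall N k, (2 <= N)%nat -> Khat N (kneg k) = Cconj (Khat N k))
  (HKL1 : forall N, (2 <= N)%nat ->
     Lp_norm 1 (trig_eval (a N) (fun k => Cscale (/ (4 * PI ^ 2)) (Khat N k)))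
       <= CRK * ln (INR N) ^ 2)
  (* the SV approximations u_N (Fourier coefficients) and pressures p_N *)
  (uhat : nat -> R -> VField) (phat : nat -> R -> Z2 -> Cx)
  (Hsupp : forall N t k, (2 <= N)%nat -> 0 <= t ->
     ((kinf k > Z.of_nat N)%Z \/ k = k0) -> uhat N t k = (C0, C0))
  (Hdiv : forall N t k, (2 <= N)%nat -> 0 <= t ->
     Cadd (Cscale (IZR (fst k)) (fst (uhat N t k)))
          (Cscale (IZR (snd k)) (snd (uhat N t k))) = C0)
  (Hreal : forall N t k, (2 <= N)%nat -> 0 <= t ->
     uhat N t (kneg k) = (Cconj (fst (uhat N t k)), Cconj (snd (uhat N t k))))
  (Hinit : forall N k, (2 <= N)%nat ->
     uhat N 0 k = (Cmul (Khat N k) (fst (u0 k)), Cmul (Khat N k) (snd (u0 k))))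
  (Hcont0 : forall N k, (2 <= N)%nat ->
     Cright_cont0 (fun s => fst (uhat N s k)) /\
     Cright_cont0 (fun s => snd (uhat N s k)))
  (Hode : forall N t k, (2 <= N)%nat -> 0 < t -> (kinf k <= Z.of_nat N)%Z ->
     Cderiv (fun s => fst (uhat N s k)) t
       (Csub (Copp (fst (NLu N (uhat N t) k)))
         (Cadd (Cmul Ci (Cscale (IZR (fst k)) (phat N t k)))
               (Cscale (eps N * knorm2 k * (1 - Rhat N k)) (fst (uhat N t k))))) /\
     Cderiv (fun s => snd (uhat N s k)) t
       (Csub (Copp (snd (NLu N (uhat N t) k)))
         (Cadd (Cmul Ci (Cscale (IZR (snd k)) (phat N t k)))
               (Cscale (eps N * knorm2 k * (1 - Rhat N k)) (snd (uhat N t k))))))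
  (* spectral decay with exponent nu and times tstar *)
  (nu : R) (Hnu : 0 <= nu <= 2) (tstar : nat -> R)
  (Heps_lim : Un_cv eps 0)
  (Hepsm_lim : Un_cv (fun N => eps N * INR (m N) ^ 2 * ln (INR N) ^ 2) 0)
  (Htstar_pos : forall N, (2 <= N)%nat -> tstar N > 0)
  (Htstar_lim : Un_cv (fun N => tstar N * Rpower (INR (a N)) (nu / 2)
                                 * INR N * ln (INR N) ^ 2) 0)
  (Hdecay : forall sigma, sigma > 0 -> exists Cs, forall N t k, (2 <= N)%nat ->
     tstar N <= t -> knorm k >= INR N / 2 ->
     Cmod (omhat (uhat N t) k) <= Cs * Rpower (INR N) (- sigma)) :
  exists C C', C > 0 /\ C' > 0 /\
    forall N t p, (2 <= N)%nat -> tstar N <= t -> 1 <= p ->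
      Lp_norm p (high_nl_fun N (uhat N t))
        <= C * / INR N * Lp_norm p (vort_fun N (uhat N t)) /\
      Lp_norm p (high_nl_fun N (uhat N t)) <= C' * / INR N.
Proof.
  destruct (Hdecay 7 ltac:(lra)) as [Cs HCs].
  set (Cs' := Rabs Cs + 1). assert (HCs' : 0 < Cs') by (unfold Cs'; pose proof (Rabs_pos Cs); lra).
  destruct Hu0_L2 as [B HB].
  set (B' := Rabs B + 1). assert (HB' : 1 <= B') by (unfold B'; pose proof (Rabs_pos B); lra).
  pose proof fourpi2_gt1 as P4.
  exists (4 * PI ^ 2 * (450 * Cs')), (4 * PI ^ 2 * (900 * (B' * Cs'))).
  split. apply Rmult_lt_0_compat; lra. split. apply Rmult_lt_0_compat. lra. apply Rmult_lt_0_compat. lra. apply Rmult_lt_0_compat; lra.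
  intros N t p HN Ht Hp.
  assert (HN2 : 2 <= INR N) by (apply (le_INR 2); auto).
  assert (Ht0 : 0 < t) by (pose proof (Htstar_pos N HN); lra).
  set (v := uhat N t).
  assert (Hsv : forall l, (kinf l > Z.of_nat N)%Z \/ l = k0 -> v l = (C0, C0)) by (intros; apply Hsupp; auto; lra).
  assert (Hdv : divfree v) by (intros k; apply Hdiv; auto; lra).
  set (D := Cs' * / INR N ^ 7).
  assert (HD : forall l, knorm l >= INR N / 2 -> Cmod (omhat v l) <= D).
  { intros l Hl. eapply Rle_trans. apply (HCs N t l HN Ht Hl).
    unfold D. rewrite Rpower_Ropp. replace 7 with (INR 7) by (simpl; ring). rewrite Rpower_pow by lra.
    apply Rmult_le_compat_r. apply Rlt_le, Rinv_0_lt_compat, pow_lt; lra.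
    unfold Cs'. pose proof (Rle_abs Cs). lra. }
  assert (HD0 : 0 <= D) by (unfold D; apply Rmult_le_pos; [lra|apply Rlt_le, Rinv_0_lt_compat, pow_lt; lra]).
  assert (Hhigh : forall W, (forall l, Cmod (omhat v l) <= W) -> 0 <= W ->
     Lp_norm p (high_nl_fun N v) <= 4 * PI ^ 2 * (450 * (W * Cs') * / INR N ^ 2)).
  { intros W HW HW0. unfold high_nl_fun. eapply Rle_trans. apply Lp_upper; auto.
    2:{ intros x1 x2. apply (high_bound N v W D Hsv Hdv HW HD). }
    apply Rmult_le_pos; [nra|]. apply Rmult_le_pos; [nra|]. apply Rmult_le_pos; [nra|]. apply Rmult_le_pos; auto.
    apply Rmult_le_compat_l. nra. unfold D. apply arith; auto; lra. }
  split.
  - set (W := Lp_norm p (vort_fun N v)).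
    assert (HW0 : 0 <= W) by (unfold W, Lp_norm; apply rpow_ge0).
    assert (HW : forall l, Cmod (omhat v l) <= W).
    { intros l. destruct (Z_le_gt_dec (kinf l) (Z.of_nat N)).
      - apply Lp_lower; auto.
      - rewrite (omhat_zero v l (Hsv l (or_introl g))), Cmod_C0. auto. }
    eapply Rle_trans. apply Hhigh; auto.
    pose proof (inv_sq_le (INR N) ltac:(lra)).
    assert (0 <= 450 * (W * Cs')) by nra.
    assert (450 * (W * Cs') * / INR N ^ 2 <= 450 * (W * Cs') * / INR N) by (apply Rmult_le_compat_l; auto).
    replace (4 * PI ^ 2 * (450 * Cs') * / INR N * W) with (4 * PI ^ 2 * (450 * (W * Cs') * / INR N)) by ring.
    apply Rmult_le_compat_l; nra.
  -
    assert (HEn : En N (uhat N) t <= En N (uhat N) 0).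
    { apply (En_le N (uhat N) (phat N) (fun k => eps N * knorm2 k * (1 - Rhat N k))).
      - intros; apply Hsupp; auto.
      - intros; apply Hdiv; auto.
      - intros; apply Hreal; auto.
      - intros; apply Hcont0; auto.
      - intros t' k Ht' Hk. apply (Hode N t' k HN Ht' Hk).
      - intros k. pose proof (Heps N HN). pose proof (HR01 N k HN).
        assert (0 <= knorm2 k) by (unfold knorm2; apply IZR_le; nia).
        apply Rmult_le_pos; [apply Rmult_le_pos|]; lra.
      - lra. }
    assert (HE0 : En N (uhat N) 0 <= B).
    { eapply Rle_trans; [|apply (HB N)]. unfold En. apply Rsum_le. intros k _.
      rewrite (Hinit N k HN). cbn [fst snd]. rewrite !esq_Cmod, !Cmod_mul.
      pose proof (HK1 N k HN). pose proof (Cmod_ge0 (Khat N k)).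
      pose proof (Cmod_ge0 (fst (u0 k))). pose proof (Cmod_ge0 (snd (u0 k))).
      assert (forall a0 b0, 0 <= a0 <= 1 -> 0 <= b0 -> (a0 * b0) ^ 2 <= b0 ^ 2) by (intros a0 b0 [X1 X2] X3; assert (a0 * a0 <= 1) by nra; assert (0 <= b0 * b0) by nra; replace ((a0*b0)^2) with ((a0*a0)*(b0*b0)) by ring; replace (b0^2) with (1*(b0*b0)) by ring; apply Rmult_le_compat_r; lra).
      apply Rplus_le_compat; auto. }
    assert (Hu : forall l, Cmod (fst (v l)) <= B' /\ Cmod (snd (v l)) <= B').
    { intros l. destruct (Z_le_gt_dec (kinf l) (Z.of_nat N)) as [Hl|Hl].
      - assert (T : esq (fst (v l)) + esq (snd (v l)) <= En N (uhat N) t).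
        { unfold En. apply (Rsum_term_le (box N) (fun k => esq (fst (uhat N t k)) + esq (snd (uhat N t k)))).
          intros; unfold esq; nra. apply In_box; auto. }
        rewrite !esq_Cmod in T. pose proof (Cmod_ge0 (fst (v l))). pose proof (Cmod_ge0 (snd (v l))).
        assert (B <= B') by (unfold B'; pose proof (Rle_abs B); lra).
        split; apply Rsqr_incr_0_var; unfold Rsqr; nra.
      - rewrite (Hsv l (or_introl Hl)). simpl. rewrite Cmod_C0. lra. }
    set (W := 2 * INR N * B').
    assert (HW : forall l, Cmod (omhat v l) <= W).
    { intros l. destruct (Z_le_gt_dec (kinf l) (Z.of_nat N)) as [Hl|Hl].
      - unfold omhat. rewrite Cmod_Ci. eapply Rle_trans. apply Cmod_sub. rewrite !Cmod_scale.
        assert (A1 : Rabs (IZR (fst l)) <= INR N).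
        { rewrite <- abs_IZR, INR_IZR_INZ. apply IZR_le. pose proof (kinf_abs1 l); lia. }
        assert (A2 : Rabs (IZR (snd l)) <= INR N).
        { rewrite <- abs_IZR, INR_IZR_INZ. apply IZR_le. pose proof (kinf_abs2 l); lia. }
        destruct (Hu l). pose proof (Rabs_pos (IZR (fst l))). pose proof (Rabs_pos (IZR (snd l))).
        pose proof (Cmod_ge0 (fst (v l))). pose proof (Cmod_ge0 (snd (v l))).
        unfold W. nra.
      - rewrite (omhat_zero v l (Hsv l (or_introl Hl))), Cmod_C0. unfold W. nra. }
    eapply Rle_trans. apply Hhigh; auto. unfold W; nra.
    right. unfold W. field. lra.
Qed.
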